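(* Let $W$ be the affine Weyl group of an irreducible reduced crystallographic root system $\Phi$ of rank 2 (so $W$ is generated by $S=\{s_0,s_1,s_2\}$ and its alcoves are triangles tiling the plane). Let $\alpha\in\Phi$, $c\in\mathbb{Z}$, and let $r_0,r_1,r_2$ be the reflections in the hyperplanes $H_{\alpha,c},H_{\alpha,c+1},H_{\alpha,c+2}$ respectively (three adjacent parallel reflections). Let $x\in W$ be an element whose alcove lies in the closed strip between $H_{r_0}$ and $H_{r_1}$, and suppose $$\ell(r_2r_1x)=\ell(r_1x)+1=\ell(x)+2.$$ Then $\ell(r_0x)=\ell(x)\pm 1$.
   Context: Let $E$ be a Euclidean plane with inner product $\langle\cdot,\cdot\rangle$, $\Phi\subset E$ an irreducible reduced crystallographic root system of rank 2 (type $A_2$, $B_2$ or $G_2$). For $\beta\in\Phi$ put $\beta^\vee=2\beta/\langle\beta,\beta\rangle$; for $k\in\mathbb{Z}$ put $H_{\beta,k}=\{v\in E:\langle v,\beta\rangle=k\}$ and $s_{\beta;k}(v)=v-(\langle v,\beta\rangle-k)\beta^\vee$. The affine Weyl group $W$ is generated by all $s_{\beta;k}$; it is a Coxeter group whose simple generators $s_0,s_1,s_2$ are the reflections in the three walls of the fundamental alcove $A_0$ (the connected component of $E\setminus\bigcup H_{\beta,k}$ containing small positive multiples of the dominant direction, with $0$ in its closure), $s_0$ being the reflection in the wall not containing $0$. Alcoves are the connected components of $E\setminus\bigcup_{\beta,k}H_{\beta,k}$; $W$ acts simply transitively on them and $w\in W$ is identified with the alcove $wA_0$. The reflections of $W$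 (conjugates of simple generators) are exactly the $s_{\beta;k}$, and $H_r$ denotes the hyperplane fixed by a reflection $r$. $\ell$ is the Coxeter length; for a reflection $r$ one has $\ell(rx)>\ell(x)$ iff the alcove $x$ lies on the same side of $H_r$ as $A_0$. *)

(* Defs.v *)
From Stdlib Require Import Reals List ZArith.
Open Scope R_scope.

Inductive rtype := A2 | B2 | G2.

(** The Euclidean plane E = R^2, coordinates taken w.r.t. the basis of
    simple roots (alpha1, alpha2); the inner product is given by the Gram
    matrix of the simple roots (positive definite). *)
Definition E := (R * R)%type.

(** Gram matrix entries (g11, g12, g22) = (<a1,a1>, <a1,a2>, <a2,a2>).
    A2: both roots of squared length 2, angle 120 deg.
    B2: a1 long (2), a2 short (1), angle 135 deg.
    G2: a1 short (2), a2 long (6), angle 150 deg. *)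
Definition gram (t : rtype) : R * R * R :=
  match t with
  | A2 => (2, -1, 2)
  | B2 => (2, -1, 1)
  | G2 => (2, -3, 6)
  end.

Definition ip (t : rtype) (u v : E) : R :=
  let '(g11, g12, g22) := gram t in
  g11 * fst u * fst v + g12 * (fst u * snd v + snd u * fst v)
  + g22 * snd u * snd v.

Definition alpha1 : E := (1, 0).
Definition alpha2 : E := (0, 1).

Definition pos_roots (t : rtype) : list E :=
  match t with
  | A2 => (1,0) :: (0,1) :: (1,1) :: nil
  | B2 => (1,0) :: (0,1) :: (1,1) :: (1,2) :: nil
  | G2 => (1,0) :: (0,1) :: (1,1) :: (2,1) :: (3,1) :: (3,2) :: nil
  end.

Definition theta (t : rtype) : E :=
  match t with
  | A2 => (1,1)
  | B2 => (1,2)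
  | G2 => (3,2)
  end.

Definition vopp (v : E) : E := (- fst v, - snd v).

Definition Phi (t : rtype) : list E := pos_roots t ++ map vopp (pos_roots t).

Definition refl (t : rtype) (beta : E) (k : R) (v : E) : E :=
  let m := (ip t v beta - k) * (2 / ip t beta beta) in
  (fst v - m * fst beta, snd v - m * snd beta).

Definition A0 (t : rtype) (v : E) : Prop :=
  0 < ip t v alpha1 /\ 0 < ip t v alpha2 /\ ip t v (theta t) < 1.

Inductive gen := S0 | S1 | S2.

Definition simple (t : rtype) (s : gen) : E -> E :=
  match s with
  | S0 => refl t (theta t) 1
  | S1 => refl t alpha1 0
  | S2 => refl t alpha2 0
  end.

(** A word [s_1; ...; s_k] evaluates to the map s_1 o ... o s_k. *)
Definition word_eval (t : rtype) (w : list gen) : E -> E :=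
  fold_right (fun s f => fun v => simple t s (f v)) (fun v => v) w.

Definition represents (t : rtype) (w : list gen) (f : E -> E) : Prop :=
  forall v, f v = word_eval t w v.

Definition coxeter_length (t : rtype) (f : E -> E) (n : nat) : Prop :=
  (exists w, length w = n /\ represents t w f) /\
  (forall w, represents t w f -> (n <= length w)%nat).

(* Main.v *)
Require Import Defs.
From Stdlib Require Import Reals List ZArith Lra Lia Bool.
Open Scope R_scope.

Definition fl (r:R) : Z := (up r - 1)%Z.
Lemma fl_spec r : IZR (fl r) <= r < IZR (fl r) + 1.
Proof. unfold fl. destruct (archimed r) as [H1 H2]. rewrite minus_IZR. simpl. lra. Qed.
Lemma fl_unique r m : IZR m <= r < IZR m + 1 -> fl r = m.
Proof. intros [H1 H2]. unfold fl.
  assert (up r = m+1)%Z. { symmetry; apply tech_up; rewrite plus_IZR; simpl; lra. } lia. Qed.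
Lemma fl_shift r m : fl (r + IZR m) = (fl r + m)%Z.
Proof. apply fl_unique. rewrite plus_IZR. pose proof (fl_spec r). lra. Qed.
Lemma fl_neg r : (forall n, r <> IZR n) -> fl (- r) = (- fl r - 1)%Z.
Proof. intros H. apply fl_unique. pose proof (fl_spec r). rewrite minus_IZR, opp_IZR. simpl.
  assert (r <> IZR (fl r)) by apply H. lra. Qed.
Lemma fl_mono r s : r <= s -> (fl r <= fl s)%Z.
Proof. intros H. destruct (Z_le_gt_dec (fl r) (fl s)) as [|H']; auto.
  assert (fl s + 1 <= fl r)%Z by lia. apply IZR_le in H0. rewrite plus_IZR in H0.
  pose proof (fl_spec r); pose proof (fl_spec s). simpl in *. lra. Qed.
Lemma fl_IZR m : fl (IZR m) = m.
Proof. apply fl_unique. lra. Qed.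
Lemma fl_lt_int r m : r < IZR m -> (fl r < m)%Z.
Proof. intros H. pose proof (fl_spec r). assert (IZR (fl r) < IZR m) by lra. apply lt_IZR; auto. Qed.
Lemma fl_ge_int r m : IZR m <= r -> (m <= fl r)%Z.
Proof. intros H. rewrite <- (fl_IZR m) at 1. apply fl_mono; auto. Qed.

Definition pr (b : E) (y : R*R) : R := fst b * fst y + snd b * snd y.
Definition P (t:rtype) (v:E) : R*R := (ip t v alpha1, ip t v alpha2).
Lemma ip_pr t v b : ip t v b = pr b (P t v).
Proof. destruct t, v, b; unfold pr, P, alpha1, alpha2; unfold ip; simpl; ring. Qed.

Definition Fl (l : list E) (y : R*R) : Z :=
  fold_right (fun b acc => (Z.abs (fl (pr b y)) + acc)%Z) 0%Z l.
Definition F t y := Fl (pos_roots t) y.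
Definition generic t (y:R*R) := forall b, In b (pos_roots t) -> forall n, pr b y <> IZR n.

Definition term (y y' : R*R) (b:E) : Z := (Z.abs (fl (pr b y)) - Z.abs (fl (pr b y')))%Z.
Definition sumZ (l : list Z) := fold_right Z.add 0%Z l.
Lemma Fl_diff l y y' : (Fl l y - Fl l y' = sumZ (map (term y y') l))%Z.
Proof. induction l as [|a l IH]; [reflexivity|]. unfold Fl, sumZ in *; simpl. unfold term at 1. lia. Qed.

Lemma lower_term u k tt : 0 < tt < 1 ->
  (Z.abs (fl u) - Z.abs (fl (u - tt * IZR k)) <=
   Z.abs (fl (u + IZR k)) - Z.abs (fl (u + (1 - tt) * IZR k)))%Z.
Proof. intros Ht.
  replace (u + (1-tt) * IZR k) with ((u - tt * IZR k) + IZR k) by ring.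
  rewrite !fl_shift.
  destruct (Z_le_gt_dec 0 k) as [Hk|Hk].
  - assert (fl (u - tt * IZR k) <= fl u)%Z. { apply fl_mono. apply IZR_le in Hk. nra. } lia.
  - assert (fl u <= fl (u - tt * IZR k))%Z. { apply fl_mono. assert (IZR k < 0) by (apply IZR_lt; lia). nra. } lia.
Qed.

Definition intvec (b:E) := exists b1 b2 : Z, b = (IZR b1, IZR b2).

Definition vsh (y:R*R) (c:R) (k:R*R) : R*R := (fst y + c * fst k, snd y + c * snd k).

Lemma lower_Fl l y k1 k2 tt : (forall b, In b l -> intvec b) -> 0 < tt < 1 ->
  (Fl l y - Fl l (vsh y (-tt) (IZR k1, IZR k2)) <=
   Fl l (vsh y 1 (IZR k1, IZR k2)) - Fl l (vsh y (1-tt) (IZR k1, IZR k2)))%Z.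
Proof. intros Hl Ht. induction l as [|b l IH]; [simpl; lia|].
  assert (IH' := IH (fun b' H => Hl b' (or_intror H))).
  destruct (Hl b (or_introl eq_refl)) as [b1 [b2 ->]].
  unfold Fl in *; simpl fold_right.
  pose proof (lower_term (pr (IZR b1, IZR b2) y) (b1*k1+b2*k2) tt Ht) as L.
  unfold pr, vsh in *; simpl in *.
  rewrite plus_IZR, !mult_IZR in L.
  replace (IZR b1 * (fst y + - tt * IZR k1) + IZR b2 * (snd y + - tt * IZR k2)) with
    (IZR b1 * fst y + IZR b2 * snd y - tt * (IZR b1 * IZR k1 + IZR b2 * IZR k2)) by ring.
  replace (IZR b1 * (fst y + 1 * IZR k1) + IZR b2 * (snd y + 1 * IZR k2)) with
    (IZR b1 * fst y + IZR b2 * snd y + (IZR b1 * IZR k1 + IZR b2 * IZR k2)) by ring.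
  replace (IZR b1 * (fst y + (1-tt) * IZR k1) + IZR b2 * (snd y + (1-tt) * IZR k2)) with
    (IZR b1 * fst y + IZR b2 * snd y + (1-tt) * (IZR b1 * IZR k1 + IZR b2 * IZR k2)) by ring.
  lia.
Qed.

Definition kap t (a:E) : R*R := (2 * ip t a alpha1 / ip t a a, 2 * ip t a alpha2 / ip t a a).
Definition sref t (a:E) (d:Z) (y:R*R) : R*R :=
  (fst y - (pr a y - IZR d) * fst (kap t a), snd y - (pr a y - IZR d) * snd (kap t a)).
Lemma pr_sref t a d y b : pr b (sref t a d y) = pr b y - (pr a y - IZR d) * pr b (kap t a).
Proof. unfold sref, pr; simpl; ring. Qed.

Lemma pair_pos_core (u v e : R) (k d : Z) : v = u - IZR k * e ->
  ((e > IZR d /\ (d >= 0)%Z) \/ (e < IZR d /\ (d <= 0)%Z)) ->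
  (Z.abs (fl u) - Z.abs (fl (u - (e - IZR d) * IZR k)) +
  (Z.abs (fl v) - Z.abs (fl (v - (e - IZR d) * (- IZR k)))) >= 0)%Z.
Proof. intros Hv Hc.
  replace (u - (e - IZR d) * IZR k) with (v + IZR (d*k)) by (rewrite mult_IZR; subst; ring).
  replace (v - (e - IZR d) * (- IZR k)) with (u + IZR (-(d*k))) by (rewrite opp_IZR, mult_IZR; subst; ring).
  rewrite !fl_shift.
  assert (E1: fl (u + IZR (-(d*k))) = (fl u - d*k)%Z) by (rewrite fl_shift; lia).
  destruct (Z.lt_trichotomy k 0) as [Hk|[Hk|Hk]].
  - assert (Rk: IZR k < 0) by (apply IZR_lt; auto).
    destruct Hc as [[He Hd]|[He Hd]].
    + assert (fl u - d*k <= fl v)%Z. { rewrite <- E1. apply fl_mono. rewrite opp_IZR, mult_IZR. nra. }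
      assert (d*k <= 0)%Z by nia. lia.
    + assert (fl v <= fl u - d*k)%Z. { rewrite <- E1. apply fl_mono. rewrite opp_IZR, mult_IZR. nra. }
      assert (d*k >= 0)%Z by nia. lia.
  - subst k. assert (v = u) by (subst; ring). subst v. replace (d*0)%Z with 0%Z by lia. lia.
  - assert (Rk: IZR k > 0) by (apply IZR_lt; auto).
    destruct Hc as [[He Hd]|[He Hd]].
    + assert (fl v <= fl u - d*k)%Z. { rewrite <- E1. apply fl_mono. rewrite opp_IZR, mult_IZR. nra. }
      assert (d*k >= 0)%Z by nia. lia.
    + assert (fl u - d*k <= fl v)%Z. { rewrite <- E1. apply fl_mono. rewrite opp_IZR, mult_IZR. nra. }
      assert (d*k <= 0)%Z by nia. lia.
Qed.

Lemma pair_neg_core (u v e : R) (k d : Z) : v = - (u - IZR k * e) ->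
  (forall n, u <> IZR n) -> (forall n, v <> IZR n) ->
  ((k > 0)%Z /\ ((e > IZR d /\ (d >= 1)%Z) \/ (e < IZR d /\ (d <= 0)%Z)) \/
   (k < 0)%Z /\ ((e > IZR d /\ (d >= 0)%Z) \/ (e < IZR d /\ (d <= -1)%Z))) ->
  (Z.abs (fl u) - Z.abs (fl (u - (e - IZR d) * IZR k)) +
  (Z.abs (fl v) - Z.abs (fl (v - (e - IZR d) * IZR k))) >= 0)%Z.
Proof. intros Hv Gu Gv Hc.
  replace (u - (e - IZR d) * IZR k) with (- v + IZR (d*k)) by (rewrite mult_IZR; subst; ring).
  replace (v - (e - IZR d) * IZR k) with (- u + IZR (d*k)) by (rewrite mult_IZR; subst; ring).
  rewrite !fl_shift, !fl_neg by auto.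
  assert (E1: fl (- u + IZR (d*k)) = (- fl u - 1 + d*k)%Z) by (rewrite fl_shift, fl_neg by auto; lia).
  destruct Hc as [[Hk Hc]|[Hk Hc]].
  - assert (Rk: IZR k > 0) by (apply IZR_lt; lia).
    destruct Hc as [[He Hd]|[He Hd]].
    + assert (- fl u - 1 + d*k <= fl v)%Z. { rewrite <- E1. apply fl_mono. rewrite mult_IZR. nra. }
      assert (d*k >= 1)%Z by nia. lia.
    + assert (fl v <= - fl u - 1 + d*k)%Z. { rewrite <- E1. apply fl_mono. rewrite mult_IZR. nra. }
      assert (d*k <= 0)%Z by nia. lia.
  - assert (Rk: IZR k < 0) by (apply IZR_lt; lia).
    destruct Hc as [[He Hd]|[He Hd]].
    + assert (fl v <= - fl u - 1 + d*k)%Z. { rewrite <- E1. apply fl_mono. rewrite mult_IZR. nra. }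
      assert (d*k <= 0)%Z by nia. lia.
    + assert (- fl u - 1 + d*k <= fl v)%Z. { rewrite <- E1. apply fl_mono. rewrite mult_IZR. nra. }
      assert (d*k >= 1)%Z by nia. lia.
Qed.

Lemma alpha_pos_core e d : (forall n, e <> IZR n) ->
  ((e > IZR d /\ (d >= 1)%Z) \/ (e < IZR d /\ (d <= 0)%Z)) ->
  (Z.abs (fl e) - Z.abs (fl (e - (e - IZR d) * 2)) >= 1)%Z.
Proof. intros G Hc.
  replace (e - (e - IZR d) * 2) with (- e + IZR (2*d)) by (rewrite mult_IZR; ring).
  rewrite fl_shift, fl_neg by auto.
  destruct Hc as [[He Hd]|[He Hd]].
  - assert (d <= fl e)%Z by (apply fl_ge_int; lra). lia.
  - assert (fl e < d)%Z by (apply fl_lt_int; lra). lia.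
Qed.

Lemma alpha_neg_core e d : (forall n, e <> IZR n) ->
  ((e > IZR d /\ (d >= 0)%Z) \/ (e < IZR d /\ (d <= -1)%Z)) ->
  (Z.abs (fl (-e)) - Z.abs (fl (- e - (e - IZR d) * (-2))) >= 1)%Z.
Proof. intros G Hc.
  replace (- e - (e - IZR d) * (-2)) with (e + IZR (-(2*d))) by (rewrite opp_IZR, mult_IZR; ring).
  rewrite fl_shift, fl_neg by auto.
  destruct Hc as [[He Hd]|[He Hd]].
  - assert (d <= fl e)%Z by (apply fl_ge_int; lra). lia.
  - assert (fl e < d)%Z by (apply fl_lt_int; lra). lia.
Qed.

Definition farP e d := (e > IZR d /\ (d >= 1)%Z) \/ (e < IZR d /\ (d <= 0)%Z).
Definition farN e d := (e > IZR d /\ (d >= 0)%Z) \/ (e < IZR d /\ (d <= -1)%Z).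
Definition gen1 (r:R) := forall n, r <> IZR n.

Lemma pair_pos_T t a b g k d y : pr b (kap t a) = IZR k -> pr g (kap t a) = - IZR k ->
  (forall z, pr g z = pr b z - IZR k * pr a z) ->
  ((pr a y > IZR d /\ (d >= 0)%Z) \/ (pr a y < IZR d /\ (d <= 0)%Z)) ->
  (term y (sref t a d y) b + term y (sref t a d y) g >= 0)%Z.
Proof. intros H1 H2 H3 Hc. unfold term. rewrite !pr_sref, H1, H2.
  apply pair_pos_core; auto. Qed.
Lemma pair_pos_TP t a b g k d y : pr b (kap t a) = IZR k -> pr g (kap t a) = - IZR k ->
  (forall z, pr g z = pr b z - IZR k * pr a z) -> farP (pr a y) d ->
  (term y (sref t a d y) b + term y (sref t a d y) g >= 0)%Z.
Proof. intros H1 H2 H3 Hc. apply pair_pos_T with k; auto. destruct Hc as [[? ?]|[? ?]]; [left|right]; split; auto; lia. Qed.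
Lemma pair_pos_TN t a b g k d y : pr b (kap t a) = IZR k -> pr g (kap t a) = - IZR k ->
  (forall z, pr g z = pr b z - IZR k * pr a z) -> farN (pr a y) d ->
  (term y (sref t a d y) b + term y (sref t a d y) g >= 0)%Z.
Proof. intros H1 H2 H3 Hc. apply pair_pos_T with k; auto. destruct Hc as [[? ?]|[? ?]]; [left|right]; split; auto; lia. Qed.

Lemma pair_neg_TP t a b g k d y : pr b (kap t a) = IZR k -> pr g (kap t a) = IZR k ->
  (forall z, pr g z = - (pr b z - IZR k * pr a z)) -> gen1 (pr b y) -> gen1 (pr g y) ->
  (k > 0)%Z -> farP (pr a y) d ->
  (term y (sref t a d y) b + term y (sref t a d y) g >= 0)%Z.
Proof. intros H1 H2 H3 G1 G2 Hk Hc. unfold term. rewrite !pr_sref, H1, H2.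
  apply pair_neg_core; auto. Qed.
Lemma pair_neg_TN t a b g k d y : pr b (kap t a) = IZR k -> pr g (kap t a) = IZR k ->
  (forall z, pr g z = - (pr b z - IZR k * pr a z)) -> gen1 (pr b y) -> gen1 (pr g y) ->
  (k < 0)%Z -> farN (pr a y) d ->
  (term y (sref t a d y) b + term y (sref t a d y) g >= 0)%Z.
Proof. intros H1 H2 H3 G1 G2 Hk Hc. unfold term. rewrite !pr_sref, H1, H2.
  apply pair_neg_core; auto. Qed.

Lemma zero_T t a b d y : pr b (kap t a) = 0 -> term y (sref t a d y) b = 0%Z.
Proof. intros H. unfold term. rewrite pr_sref, H. replace (pr b y - (pr a y - IZR d) * 0) with (pr b y) by ring. lia. Qed.

Lemma alpha_pos_T t a d y : pr a (kap t a) = 2 -> gen1 (pr a y) -> farP (pr a y) d ->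
  (term y (sref t a d y) a >= 1)%Z.
Proof. intros H G Hc. unfold term. rewrite pr_sref, H. apply alpha_pos_core; auto. Qed.

Lemma alpha_neg_T t a b d y : pr b (kap t a) = -2 -> (forall z, pr b z = - pr a z) ->
  gen1 (pr b y) -> farN (pr a y) d -> (term y (sref t a d y) b >= 1)%Z.
Proof. intros H H2 G Hc. unfold term. rewrite pr_sref, H, !H2.
  apply alpha_neg_core; auto. intros n Hn. apply (G (-n)%Z). rewrite H2, opp_IZR, Hn. ring. Qed.

Ltac inpos := simpl; repeat (first [left; reflexivity | right]).

Lemma refl_pos t a d y : In a (pos_roots t) -> generic t y -> farP (pr a y) d -> (F t (sref t a d y) <= F t y - 1)%Z.
Proof. intros Ha Hg Hc. destruct t; simpl in Ha; repeat destruct Ha as [<-|Ha]; try contradiction.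
-
  assert (K : kap A2 (1,0) = (IZR (2)%Z, IZR (-1)%Z)) by (unfold kap; unfold ip; simpl; f_equal; field).
  pose proof (Fl_diff (pos_roots A2) y (sref A2 (1,0) d y)) as HD. unfold F. cbn [pos_roots map sumZ fold_right] in HD. cbn [pos_roots].
  pose proof (alpha_pos_T A2 (1,0) d y ltac:(rewrite K; unfold pr; simpl; ring) (Hg (1,0) ltac:(inpos)) Hc).
  pose proof (pair_pos_TP A2 (1,0) (0,1) (1,1) (-1)%Z d y ltac:(rewrite K; unfold pr; simpl; ring) ltac:(rewrite K; unfold pr; simpl; ring) ltac:(intro z; unfold pr, vopp; simpl; ring) Hc).
  lia.
-
  assert (K : kap A2 (0,1) = (IZR (-1)%Z, IZR (2)%Z)) by (unfold kap; unfold ip; simpl; f_equal; field).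
  pose proof (Fl_diff (pos_roots A2) y (sref A2 (0,1) d y)) as HD. unfold F. cbn [pos_roots map sumZ fold_right] in HD. cbn [pos_roots].
  pose proof (pair_pos_TP A2 (0,1) (1,0) (1,1) (-1)%Z d y ltac:(rewrite K; unfold pr; simpl; ring) ltac:(rewrite K; unfold pr; simpl; ring) ltac:(intro z; unfold pr, vopp; simpl; ring) Hc).
  pose proof (alpha_pos_T A2 (0,1) d y ltac:(rewrite K; unfold pr; simpl; ring) (Hg (0,1) ltac:(inpos)) Hc).
  lia.
-
  assert (K : kap A2 (1,1) = (IZR (1)%Z, IZR (1)%Z)) by (unfold kap; unfold ip; simpl; f_equal; field).
  pose proof (Fl_diff (pos_roots A2) y (sref A2 (1,1) d y)) as HD. unfold F. cbn [pos_roots map sumZ fold_right] in HD. cbn [pos_roots].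
  pose proof (pair_neg_TP A2 (1,1) (1,0) (0,1) (1)%Z d y ltac:(rewrite K; unfold pr; simpl; ring) ltac:(rewrite K; unfold pr; simpl; ring) ltac:(intro z; unfold pr, vopp; simpl; ring) (Hg (1,0) ltac:(inpos)) (Hg (0,1) ltac:(inpos)) ltac:(lia) Hc).
  pose proof (alpha_pos_T A2 (1,1) d y ltac:(rewrite K; unfold pr; simpl; ring) (Hg (1,1) ltac:(inpos)) Hc).
  lia.
-
  assert (K : kap B2 (1,0) = (IZR (2)%Z, IZR (-1)%Z)) by (unfold kap; unfold ip; simpl; f_equal; field).
  pose proof (Fl_diff (pos_roots B2) y (sref B2 (1,0) d y)) as HD. unfold F. cbn [pos_roots map sumZ fold_right] in HD. cbn [pos_roots].
  pose proof (alpha_pos_T B2 (1,0) d y ltac:(rewrite K; unfold pr; simpl; ring) (Hg (1,0) ltac:(inpos)) Hc).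
  pose proof (pair_pos_TP B2 (1,0) (0,1) (1,1) (-1)%Z d y ltac:(rewrite K; unfold pr; simpl; ring) ltac:(rewrite K; unfold pr; simpl; ring) ltac:(intro z; unfold pr, vopp; simpl; ring) Hc).
  pose proof (zero_T B2 (1,0) (1,2) d y ltac:(rewrite K; unfold pr; simpl; ring)).
  lia.
-
  assert (K : kap B2 (0,1) = (IZR (-2)%Z, IZR (2)%Z)) by (unfold kap; unfold ip; simpl; f_equal; field).
  pose proof (Fl_diff (pos_roots B2) y (sref B2 (0,1) d y)) as HD. unfold F. cbn [pos_roots map sumZ fold_right] in HD. cbn [pos_roots].
  pose proof (pair_pos_TP B2 (0,1) (1,0) (1,2) (-2)%Z d y ltac:(rewrite K; unfold pr; simpl; ring) ltac:(rewrite K; unfold pr; simpl; ring) ltac:(intro z; unfold pr, vopp; simpl; ring) Hc).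
  pose proof (alpha_pos_T B2 (0,1) d y ltac:(rewrite K; unfold pr; simpl; ring) (Hg (0,1) ltac:(inpos)) Hc).
  pose proof (zero_T B2 (0,1) (1,1) d y ltac:(rewrite K; unfold pr; simpl; ring)).
  lia.
-
  assert (K : kap B2 (1,1) = (IZR (2)%Z, IZR (0)%Z)) by (unfold kap; unfold ip; simpl; f_equal; field).
  pose proof (Fl_diff (pos_roots B2) y (sref B2 (1,1) d y)) as HD. unfold F. cbn [pos_roots map sumZ fold_right] in HD. cbn [pos_roots].
  pose proof (pair_neg_TP B2 (1,1) (1,0) (1,2) (2)%Z d y ltac:(rewrite K; unfold pr; simpl; ring) ltac:(rewrite K; unfold pr; simpl; ring) ltac:(intro z; unfold pr, vopp; simpl; ring) (Hg (1,0) ltac:(inpos)) (Hg (1,2) ltac:(inpos)) ltac:(lia) Hc).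
  pose proof (zero_T B2 (1,1) (0,1) d y ltac:(rewrite K; unfold pr; simpl; ring)).
  pose proof (alpha_pos_T B2 (1,1) d y ltac:(rewrite K; unfold pr; simpl; ring) (Hg (1,1) ltac:(inpos)) Hc).
  lia.
-
  assert (K : kap B2 (1,2) = (IZR (0)%Z, IZR (1)%Z)) by (unfold kap; unfold ip; simpl; f_equal; field).
  pose proof (Fl_diff (pos_roots B2) y (sref B2 (1,2) d y)) as HD. unfold F. cbn [pos_roots map sumZ fold_right] in HD. cbn [pos_roots].
  pose proof (zero_T B2 (1,2) (1,0) d y ltac:(rewrite K; unfold pr; simpl; ring)).
  pose proof (pair_neg_TP B2 (1,2) (0,1) (1,1) (1)%Z d y ltac:(rewrite K; unfold pr; simpl; ring) ltac:(rewrite K; unfold pr; simpl; ring) ltac:(intro z; unfold pr, vopp; simpl; ring) (Hg (0,1) ltac:(inpos)) (Hg (1,1) ltac:(inpos)) ltac:(lia) Hc).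
  pose proof (alpha_pos_T B2 (1,2) d y ltac:(rewrite K; unfold pr; simpl; ring) (Hg (1,2) ltac:(inpos)) Hc).
  lia.
-
  assert (K : kap G2 (1,0) = (IZR (2)%Z, IZR (-3)%Z)) by (unfold kap; unfold ip; simpl; f_equal; field).
  pose proof (Fl_diff (pos_roots G2) y (sref G2 (1,0) d y)) as HD. unfold F. cbn [pos_roots map sumZ fold_right] in HD. cbn [pos_roots].
  pose proof (alpha_pos_T G2 (1,0) d y ltac:(rewrite K; unfold pr; simpl; ring) (Hg (1,0) ltac:(inpos)) Hc).
  pose proof (pair_pos_TP G2 (1,0) (0,1) (3,1) (-3)%Z d y ltac:(rewrite K; unfold pr; simpl; ring) ltac:(rewrite K; unfold pr; simpl; ring) ltac:(intro z; unfold pr, vopp; simpl; ring) Hc).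
  pose proof (pair_pos_TP G2 (1,0) (1,1) (2,1) (-1)%Z d y ltac:(rewrite K; unfold pr; simpl; ring) ltac:(rewrite K; unfold pr; simpl; ring) ltac:(intro z; unfold pr, vopp; simpl; ring) Hc).
  pose proof (zero_T G2 (1,0) (3,2) d y ltac:(rewrite K; unfold pr; simpl; ring)).
  lia.
-
  assert (K : kap G2 (0,1) = (IZR (-1)%Z, IZR (2)%Z)) by (unfold kap; unfold ip; simpl; f_equal; field).
  pose proof (Fl_diff (pos_roots G2) y (sref G2 (0,1) d y)) as HD. unfold F. cbn [pos_roots map sumZ fold_right] in HD. cbn [pos_roots].
  pose proof (pair_pos_TP G2 (0,1) (1,0) (1,1) (-1)%Z d y ltac:(rewrite K; unfold pr; simpl; ring) ltac:(rewrite K; unfold pr; simpl; ring) ltac:(intro z; unfold pr, vopp; simpl; ring) Hc).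
  pose proof (alpha_pos_T G2 (0,1) d y ltac:(rewrite K; unfold pr; simpl; ring) (Hg (0,1) ltac:(inpos)) Hc).
  pose proof (zero_T G2 (0,1) (2,1) d y ltac:(rewrite K; unfold pr; simpl; ring)).
  pose proof (pair_pos_TP G2 (0,1) (3,1) (3,2) (-1)%Z d y ltac:(rewrite K; unfold pr; simpl; ring) ltac:(rewrite K; unfold pr; simpl; ring) ltac:(intro z; unfold pr, vopp; simpl; ring) Hc).
  lia.
-
  assert (K : kap G2 (1,1) = (IZR (-1)%Z, IZR (3)%Z)) by (unfold kap; unfold ip; simpl; f_equal; field).
  pose proof (Fl_diff (pos_roots G2) y (sref G2 (1,1) d y)) as HD. unfold F. cbn [pos_roots map sumZ fold_right] in HD. cbn [pos_roots].
  pose proof (pair_pos_TP G2 (1,1) (1,0) (2,1) (-1)%Z d y ltac:(rewrite K; unfold pr; simpl; ring) ltac:(rewrite K; unfold pr; simpl; ring) ltac:(intro z; unfold pr, vopp; simpl; ring) Hc).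
  pose proof (pair_neg_TP G2 (1,1) (0,1) (3,2) (3)%Z d y ltac:(rewrite K; unfold pr; simpl; ring) ltac:(rewrite K; unfold pr; simpl; ring) ltac:(intro z; unfold pr, vopp; simpl; ring) (Hg (0,1) ltac:(inpos)) (Hg (3,2) ltac:(inpos)) ltac:(lia) Hc).
  pose proof (alpha_pos_T G2 (1,1) d y ltac:(rewrite K; unfold pr; simpl; ring) (Hg (1,1) ltac:(inpos)) Hc).
  pose proof (zero_T G2 (1,1) (3,1) d y ltac:(rewrite K; unfold pr; simpl; ring)).
  lia.
-
  assert (K : kap G2 (2,1) = (IZR (1)%Z, IZR (0)%Z)) by (unfold kap; unfold ip; simpl; f_equal; field).
  pose proof (Fl_diff (pos_roots G2) y (sref G2 (2,1) d y)) as HD. unfold F. cbn [pos_roots map sumZ fold_right] in HD. cbn [pos_roots].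
  pose proof (pair_neg_TP G2 (2,1) (1,0) (1,1) (1)%Z d y ltac:(rewrite K; unfold pr; simpl; ring) ltac:(rewrite K; unfold pr; simpl; ring) ltac:(intro z; unfold pr, vopp; simpl; ring) (Hg (1,0) ltac:(inpos)) (Hg (1,1) ltac:(inpos)) ltac:(lia) Hc).
  pose proof (zero_T G2 (2,1) (0,1) d y ltac:(rewrite K; unfold pr; simpl; ring)).
  pose proof (alpha_pos_T G2 (2,1) d y ltac:(rewrite K; unfold pr; simpl; ring) (Hg (2,1) ltac:(inpos)) Hc).
  pose proof (pair_neg_TP G2 (2,1) (3,1) (3,2) (3)%Z d y ltac:(rewrite K; unfold pr; simpl; ring) ltac:(rewrite K; unfold pr; simpl; ring) ltac:(intro z; unfold pr, vopp; simpl; ring) (Hg (3,1) ltac:(inpos)) (Hg (3,2) ltac:(inpos)) ltac:(lia) Hc).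
  lia.
-
  assert (K : kap G2 (3,1) = (IZR (1)%Z, IZR (-1)%Z)) by (unfold kap; unfold ip; simpl; f_equal; field).
  pose proof (Fl_diff (pos_roots G2) y (sref G2 (3,1) d y)) as HD. unfold F. cbn [pos_roots map sumZ fold_right] in HD. cbn [pos_roots].
  pose proof (pair_neg_TP G2 (3,1) (1,0) (2,1) (1)%Z d y ltac:(rewrite K; unfold pr; simpl; ring) ltac:(rewrite K; unfold pr; simpl; ring) ltac:(intro z; unfold pr, vopp; simpl; ring) (Hg (1,0) ltac:(inpos)) (Hg (2,1) ltac:(inpos)) ltac:(lia) Hc).
  pose proof (pair_pos_TP G2 (3,1) (0,1) (3,2) (-1)%Z d y ltac:(rewrite K; unfold pr; simpl; ring) ltac:(rewrite K; unfold pr; simpl; ring) ltac:(intro z; unfold pr, vopp; simpl; ring) Hc).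
  pose proof (zero_T G2 (3,1) (1,1) d y ltac:(rewrite K; unfold pr; simpl; ring)).
  pose proof (alpha_pos_T G2 (3,1) d y ltac:(rewrite K; unfold pr; simpl; ring) (Hg (3,1) ltac:(inpos)) Hc).
  lia.
-
  assert (K : kap G2 (3,2) = (IZR (0)%Z, IZR (1)%Z)) by (unfold kap; unfold ip; simpl; f_equal; field).
  pose proof (Fl_diff (pos_roots G2) y (sref G2 (3,2) d y)) as HD. unfold F. cbn [pos_roots map sumZ fold_right] in HD. cbn [pos_roots].
  pose proof (zero_T G2 (3,2) (1,0) d y ltac:(rewrite K; unfold pr; simpl; ring)).
  pose proof (pair_neg_TP G2 (3,2) (0,1) (3,1) (1)%Z d y ltac:(rewrite K; unfold pr; simpl; ring) ltac:(rewrite K; unfold pr; simpl; ring) ltac:(intro z; unfold pr, vopp; simpl; ring) (Hg (0,1) ltac:(inpos)) (Hg (3,1) ltac:(inpos)) ltac:(lia) Hc).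
  pose proof (pair_neg_TP G2 (3,2) (1,1) (2,1) (1)%Z d y ltac:(rewrite K; unfold pr; simpl; ring) ltac:(rewrite K; unfold pr; simpl; ring) ltac:(intro z; unfold pr, vopp; simpl; ring) (Hg (1,1) ltac:(inpos)) (Hg (2,1) ltac:(inpos)) ltac:(lia) Hc).
  pose proof (alpha_pos_T G2 (3,2) d y ltac:(rewrite K; unfold pr; simpl; ring) (Hg (3,2) ltac:(inpos)) Hc).
  lia.
Qed.

Lemma refl_neg t b d y : In b (pos_roots t) -> generic t y -> farN (pr (vopp b) y) d -> (F t (sref t (vopp b) d y) <= F t y - 1)%Z.
Proof. intros Ha Hg Hc. destruct t; simpl in Ha; repeat destruct Ha as [<-|Ha]; try contradiction.
-
  assert (K : kap A2 (vopp (1,0)) = (IZR (-2)%Z, IZR (1)%Z)) by (unfold kap; unfold ip; simpl; f_equal; field).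
  pose proof (Fl_diff (pos_roots A2) y (sref A2 (vopp (1,0)) d y)) as HD. unfold F. cbn [pos_roots map sumZ fold_right] in HD. cbn [pos_roots].
  pose proof (alpha_neg_T A2 (vopp (1,0)) (1,0) d y ltac:(rewrite K; unfold pr; simpl; ring) ltac:(intro z; unfold pr, vopp; simpl; ring) (Hg (1,0) ltac:(inpos)) Hc).
  pose proof (pair_pos_TN A2 (vopp (1,0)) (0,1) (1,1) (1)%Z d y ltac:(rewrite K; unfold pr; simpl; ring) ltac:(rewrite K; unfold pr; simpl; ring) ltac:(intro z; unfold pr, vopp; simpl; ring) Hc).
  lia.
-
  assert (K : kap A2 (vopp (0,1)) = (IZR (1)%Z, IZR (-2)%Z)) by (unfold kap; unfold ip; simpl; f_equal; field).
  pose proof (Fl_diff (pos_roots A2) y (sref A2 (vopp (0,1)) d y)) as HD. unfold F. cbn [pos_roots map sumZ fold_right] in HD. cbn [pos_roots].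
  pose proof (pair_pos_TN A2 (vopp (0,1)) (1,0) (1,1) (1)%Z d y ltac:(rewrite K; unfold pr; simpl; ring) ltac:(rewrite K; unfold pr; simpl; ring) ltac:(intro z; unfold pr, vopp; simpl; ring) Hc).
  pose proof (alpha_neg_T A2 (vopp (0,1)) (0,1) d y ltac:(rewrite K; unfold pr; simpl; ring) ltac:(intro z; unfold pr, vopp; simpl; ring) (Hg (0,1) ltac:(inpos)) Hc).
  lia.
-
  assert (K : kap A2 (vopp (1,1)) = (IZR (-1)%Z, IZR (-1)%Z)) by (unfold kap; unfold ip; simpl; f_equal; field).
  pose proof (Fl_diff (pos_roots A2) y (sref A2 (vopp (1,1)) d y)) as HD. unfold F. cbn [pos_roots map sumZ fold_right] in HD. cbn [pos_roots].
  pose proof (pair_neg_TN A2 (vopp (1,1)) (1,0) (0,1) (-1)%Z d y ltac:(rewrite K; unfold pr; simpl; ring) ltac:(rewrite K; unfold pr; simpl; ring) ltac:(intro z; unfold pr, vopp; simpl; ring) (Hg (1,0) ltac:(inpos)) (Hg (0,1) ltac:(inpos)) ltac:(lia) Hc).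
  pose proof (alpha_neg_T A2 (vopp (1,1)) (1,1) d y ltac:(rewrite K; unfold pr; simpl; ring) ltac:(intro z; unfold pr, vopp; simpl; ring) (Hg (1,1) ltac:(inpos)) Hc).
  lia.
-
  assert (K : kap B2 (vopp (1,0)) = (IZR (-2)%Z, IZR (1)%Z)) by (unfold kap; unfold ip; simpl; f_equal; field).
  pose proof (Fl_diff (pos_roots B2) y (sref B2 (vopp (1,0)) d y)) as HD. unfold F. cbn [pos_roots map sumZ fold_right] in HD. cbn [pos_roots].
  pose proof (alpha_neg_T B2 (vopp (1,0)) (1,0) d y ltac:(rewrite K; unfold pr; simpl; ring) ltac:(intro z; unfold pr, vopp; simpl; ring) (Hg (1,0) ltac:(inpos)) Hc).
  pose proof (pair_pos_TN B2 (vopp (1,0)) (0,1) (1,1) (1)%Z d y ltac:(rewrite K; unfold pr; simpl; ring) ltac:(rewrite K; unfold pr; simpl; ring) ltac:(intro z; unfold pr, vopp; simpl; ring) Hc).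
  pose proof (zero_T B2 (vopp (1,0)) (1,2) d y ltac:(rewrite K; unfold pr; simpl; ring)).
  lia.
-
  assert (K : kap B2 (vopp (0,1)) = (IZR (2)%Z, IZR (-2)%Z)) by (unfold kap; unfold ip; simpl; f_equal; field).
  pose proof (Fl_diff (pos_roots B2) y (sref B2 (vopp (0,1)) d y)) as HD. unfold F. cbn [pos_roots map sumZ fold_right] in HD. cbn [pos_roots].
  pose proof (pair_pos_TN B2 (vopp (0,1)) (1,0) (1,2) (2)%Z d y ltac:(rewrite K; unfold pr; simpl; ring) ltac:(rewrite K; unfold pr; simpl; ring) ltac:(intro z; unfold pr, vopp; simpl; ring) Hc).
  pose proof (alpha_neg_T B2 (vopp (0,1)) (0,1) d y ltac:(rewrite K; unfold pr; simpl; ring) ltac:(intro z; unfold pr, vopp; simpl; ring) (Hg (0,1) ltac:(inpos)) Hc).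
  pose proof (zero_T B2 (vopp (0,1)) (1,1) d y ltac:(rewrite K; unfold pr; simpl; ring)).
  lia.
-
  assert (K : kap B2 (vopp (1,1)) = (IZR (-2)%Z, IZR (0)%Z)) by (unfold kap; unfold ip; simpl; f_equal; field).
  pose proof (Fl_diff (pos_roots B2) y (sref B2 (vopp (1,1)) d y)) as HD. unfold F. cbn [pos_roots map sumZ fold_right] in HD. cbn [pos_roots].
  pose proof (pair_neg_TN B2 (vopp (1,1)) (1,0) (1,2) (-2)%Z d y ltac:(rewrite K; unfold pr; simpl; ring) ltac:(rewrite K; unfold pr; simpl; ring) ltac:(intro z; unfold pr, vopp; simpl; ring) (Hg (1,0) ltac:(inpos)) (Hg (1,2) ltac:(inpos)) ltac:(lia) Hc).
  pose proof (zero_T B2 (vopp (1,1)) (0,1) d y ltac:(rewrite K; unfold pr; simpl; ring)).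
  pose proof (alpha_neg_T B2 (vopp (1,1)) (1,1) d y ltac:(rewrite K; unfold pr; simpl; ring) ltac:(intro z; unfold pr, vopp; simpl; ring) (Hg (1,1) ltac:(inpos)) Hc).
  lia.
-
  assert (K : kap B2 (vopp (1,2)) = (IZR (0)%Z, IZR (-1)%Z)) by (unfold kap; unfold ip; simpl; f_equal; field).
  pose proof (Fl_diff (pos_roots B2) y (sref B2 (vopp (1,2)) d y)) as HD. unfold F. cbn [pos_roots map sumZ fold_right] in HD. cbn [pos_roots].
  pose proof (zero_T B2 (vopp (1,2)) (1,0) d y ltac:(rewrite K; unfold pr; simpl; ring)).
  pose proof (pair_neg_TN B2 (vopp (1,2)) (0,1) (1,1) (-1)%Z d y ltac:(rewrite K; unfold pr; simpl; ring) ltac:(rewrite K; unfold pr; simpl; ring) ltac:(intro z; unfold pr, vopp; simpl; ring) (Hg (0,1) ltac:(inpos)) (Hg (1,1) ltac:(inpos)) ltac:(lia) Hc).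
  pose proof (alpha_neg_T B2 (vopp (1,2)) (1,2) d y ltac:(rewrite K; unfold pr; simpl; ring) ltac:(intro z; unfold pr, vopp; simpl; ring) (Hg (1,2) ltac:(inpos)) Hc).
  lia.
-
  assert (K : kap G2 (vopp (1,0)) = (IZR (-2)%Z, IZR (3)%Z)) by (unfold kap; unfold ip; simpl; f_equal; field).
  pose proof (Fl_diff (pos_roots G2) y (sref G2 (vopp (1,0)) d y)) as HD. unfold F. cbn [pos_roots map sumZ fold_right] in HD. cbn [pos_roots].
  pose proof (alpha_neg_T G2 (vopp (1,0)) (1,0) d y ltac:(rewrite K; unfold pr; simpl; ring) ltac:(intro z; unfold pr, vopp; simpl; ring) (Hg (1,0) ltac:(inpos)) Hc).
  pose proof (pair_pos_TN G2 (vopp (1,0)) (0,1) (3,1) (3)%Z d y ltac:(rewrite K; unfold pr; simpl; ring) ltac:(rewrite K; unfold pr; simpl; ring) ltac:(intro z; unfold pr, vopp; simpl; ring) Hc).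
  pose proof (pair_pos_TN G2 (vopp (1,0)) (1,1) (2,1) (1)%Z d y ltac:(rewrite K; unfold pr; simpl; ring) ltac:(rewrite K; unfold pr; simpl; ring) ltac:(intro z; unfold pr, vopp; simpl; ring) Hc).
  pose proof (zero_T G2 (vopp (1,0)) (3,2) d y ltac:(rewrite K; unfold pr; simpl; ring)).
  lia.
-
  assert (K : kap G2 (vopp (0,1)) = (IZR (1)%Z, IZR (-2)%Z)) by (unfold kap; unfold ip; simpl; f_equal; field).
  pose proof (Fl_diff (pos_roots G2) y (sref G2 (vopp (0,1)) d y)) as HD. unfold F. cbn [pos_roots map sumZ fold_right] in HD. cbn [pos_roots].
  pose proof (pair_pos_TN G2 (vopp (0,1)) (1,0) (1,1) (1)%Z d y ltac:(rewrite K; unfold pr; simpl; ring) ltac:(rewrite K; unfold pr; simpl; ring) ltac:(intro z; unfold pr, vopp; simpl; ring) Hc).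
  pose proof (alpha_neg_T G2 (vopp (0,1)) (0,1) d y ltac:(rewrite K; unfold pr; simpl; ring) ltac:(intro z; unfold pr, vopp; simpl; ring) (Hg (0,1) ltac:(inpos)) Hc).
  pose proof (zero_T G2 (vopp (0,1)) (2,1) d y ltac:(rewrite K; unfold pr; simpl; ring)).
  pose proof (pair_pos_TN G2 (vopp (0,1)) (3,1) (3,2) (1)%Z d y ltac:(rewrite K; unfold pr; simpl; ring) ltac:(rewrite K; unfold pr; simpl; ring) ltac:(intro z; unfold pr, vopp; simpl; ring) Hc).
  lia.
-
  assert (K : kap G2 (vopp (1,1)) = (IZR (1)%Z, IZR (-3)%Z)) by (unfold kap; unfold ip; simpl; f_equal; field).
  pose proof (Fl_diff (pos_roots G2) y (sref G2 (vopp (1,1)) d y)) as HD. unfold F. cbn [pos_roots map sumZ fold_right] in HD. cbn [pos_roots].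
  pose proof (pair_pos_TN G2 (vopp (1,1)) (1,0) (2,1) (1)%Z d y ltac:(rewrite K; unfold pr; simpl; ring) ltac:(rewrite K; unfold pr; simpl; ring) ltac:(intro z; unfold pr, vopp; simpl; ring) Hc).
  pose proof (pair_neg_TN G2 (vopp (1,1)) (0,1) (3,2) (-3)%Z d y ltac:(rewrite K; unfold pr; simpl; ring) ltac:(rewrite K; unfold pr; simpl; ring) ltac:(intro z; unfold pr, vopp; simpl; ring) (Hg (0,1) ltac:(inpos)) (Hg (3,2) ltac:(inpos)) ltac:(lia) Hc).
  pose proof (alpha_neg_T G2 (vopp (1,1)) (1,1) d y ltac:(rewrite K; unfold pr; simpl; ring) ltac:(intro z; unfold pr, vopp; simpl; ring) (Hg (1,1) ltac:(inpos)) Hc).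
  pose proof (zero_T G2 (vopp (1,1)) (3,1) d y ltac:(rewrite K; unfold pr; simpl; ring)).
  lia.
-
  assert (K : kap G2 (vopp (2,1)) = (IZR (-1)%Z, IZR (0)%Z)) by (unfold kap; unfold ip; simpl; f_equal; field).
  pose proof (Fl_diff (pos_roots G2) y (sref G2 (vopp (2,1)) d y)) as HD. unfold F. cbn [pos_roots map sumZ fold_right] in HD. cbn [pos_roots].
  pose proof (pair_neg_TN G2 (vopp (2,1)) (1,0) (1,1) (-1)%Z d y ltac:(rewrite K; unfold pr; simpl; ring) ltac:(rewrite K; unfold pr; simpl; ring) ltac:(intro z; unfold pr, vopp; simpl; ring) (Hg (1,0) ltac:(inpos)) (Hg (1,1) ltac:(inpos)) ltac:(lia) Hc).
  pose proof (zero_T G2 (vopp (2,1)) (0,1) d y ltac:(rewrite K; unfold pr; simpl; ring)).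
  pose proof (alpha_neg_T G2 (vopp (2,1)) (2,1) d y ltac:(rewrite K; unfold pr; simpl; ring) ltac:(intro z; unfold pr, vopp; simpl; ring) (Hg (2,1) ltac:(inpos)) Hc).
  pose proof (pair_neg_TN G2 (vopp (2,1)) (3,1) (3,2) (-3)%Z d y ltac:(rewrite K; unfold pr; simpl; ring) ltac:(rewrite K; unfold pr; simpl; ring) ltac:(intro z; unfold pr, vopp; simpl; ring) (Hg (3,1) ltac:(inpos)) (Hg (3,2) ltac:(inpos)) ltac:(lia) Hc).
  lia.
-
  assert (K : kap G2 (vopp (3,1)) = (IZR (-1)%Z, IZR (1)%Z)) by (unfold kap; unfold ip; simpl; f_equal; field).
  pose proof (Fl_diff (pos_roots G2) y (sref G2 (vopp (3,1)) d y)) as HD. unfold F. cbn [pos_roots map sumZ fold_right] in HD. cbn [pos_roots].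
  pose proof (pair_neg_TN G2 (vopp (3,1)) (1,0) (2,1) (-1)%Z d y ltac:(rewrite K; unfold pr; simpl; ring) ltac:(rewrite K; unfold pr; simpl; ring) ltac:(intro z; unfold pr, vopp; simpl; ring) (Hg (1,0) ltac:(inpos)) (Hg (2,1) ltac:(inpos)) ltac:(lia) Hc).
  pose proof (pair_pos_TN G2 (vopp (3,1)) (0,1) (3,2) (1)%Z d y ltac:(rewrite K; unfold pr; simpl; ring) ltac:(rewrite K; unfold pr; simpl; ring) ltac:(intro z; unfold pr, vopp; simpl; ring) Hc).
  pose proof (zero_T G2 (vopp (3,1)) (1,1) d y ltac:(rewrite K; unfold pr; simpl; ring)).
  pose proof (alpha_neg_T G2 (vopp (3,1)) (3,1) d y ltac:(rewrite K; unfold pr; simpl; ring) ltac:(intro z; unfold pr, vopp; simpl; ring) (Hg (3,1) ltac:(inpos)) Hc).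
  lia.
-
  assert (K : kap G2 (vopp (3,2)) = (IZR (0)%Z, IZR (-1)%Z)) by (unfold kap; unfold ip; simpl; f_equal; field).
  pose proof (Fl_diff (pos_roots G2) y (sref G2 (vopp (3,2)) d y)) as HD. unfold F. cbn [pos_roots map sumZ fold_right] in HD. cbn [pos_roots].
  pose proof (zero_T G2 (vopp (3,2)) (1,0) d y ltac:(rewrite K; unfold pr; simpl; ring)).
  pose proof (pair_neg_TN G2 (vopp (3,2)) (0,1) (3,1) (-1)%Z d y ltac:(rewrite K; unfold pr; simpl; ring) ltac:(rewrite K; unfold pr; simpl; ring) ltac:(intro z; unfold pr, vopp; simpl; ring) (Hg (0,1) ltac:(inpos)) (Hg (3,1) ltac:(inpos)) ltac:(lia) Hc).
  pose proof (pair_neg_TN G2 (vopp (3,2)) (1,1) (2,1) (-1)%Z d y ltac:(rewrite K; unfold pr; simpl; ring) ltac:(rewrite K; unfold pr; simpl; ring) ltac:(intro z; unfold pr, vopp; simpl; ring) (Hg (1,1) ltac:(inpos)) (Hg (2,1) ltac:(inpos)) ltac:(lia) Hc).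
  pose proof (alpha_neg_T G2 (vopp (3,2)) (3,2) d y ltac:(rewrite K; unfold pr; simpl; ring) ltac:(intro z; unfold pr, vopp; simpl; ring) (Hg (3,2) ltac:(inpos)) Hc).
  lia.
Qed.

Definition Zmat := (Z*Z*Z*Z)%type.
Definition Tint (A:Zmat) (b:Z*Z) (y:R*R) : R*R :=
  let '(a11,a12,a21,a22) := A in
  (IZR a11 * fst y + IZR a12 * snd y + IZR (fst b), IZR a21 * fst y + IZR a22 * snd y + IZR (snd b)).
Definition matmul (A B : Zmat) : Zmat :=
  let '(a11,a12,a21,a22) := A in let '(b11,b12,b21,b22) := B in
  ((a11*b11+a12*b21)%Z, (a11*b12+a12*b22)%Z, (a21*b11+a22*b21)%Z, (a21*b12+a22*b22)%Z).
Definition matvec (A : Zmat) (v : Z*Z) : Z*Z :=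
  let '(a11,a12,a21,a22) := A in ((a11*fst v + a12*snd v)%Z, (a21*fst v + a22*snd v)%Z).
Definition vaddZ (u v : Z*Z) : Z*Z := ((fst u + fst v)%Z, (snd u + snd v)%Z).
Definition Amat (t:rtype) (s:gen) : Zmat := match t, s with
  | A2, S0 => ((0)%Z,(-1)%Z,(-1)%Z,(0)%Z)
  | A2, S1 => ((-1)%Z,(0)%Z,(1)%Z,(1)%Z)
  | A2, S2 => ((1)%Z,(1)%Z,(0)%Z,(-1)%Z)
  | B2, S0 => ((1)%Z,(0)%Z,(-1)%Z,(-1)%Z)
  | B2, S1 => ((-1)%Z,(0)%Z,(1)%Z,(1)%Z)
  | B2, S2 => ((1)%Z,(2)%Z,(0)%Z,(-1)%Z)
  | G2, S0 => ((1)%Z,(0)%Z,(-3)%Z,(-1)%Z)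
  | G2, S1 => ((-1)%Z,(0)%Z,(3)%Z,(1)%Z)
  | G2, S2 => ((1)%Z,(1)%Z,(0)%Z,(-1)%Z)
  end.
Definition bvec (t:rtype) (s:gen) : Z*Z := match t, s with
  | A2, S0 => ((1)%Z,(1)%Z)
  | A2, S1 => ((0)%Z,(0)%Z)
  | A2, S2 => ((0)%Z,(0)%Z)
  | B2, S0 => ((0)%Z,(1)%Z)
  | B2, S1 => ((0)%Z,(0)%Z)
  | B2, S2 => ((0)%Z,(0)%Z)
  | G2, S0 => ((0)%Z,(1)%Z)
  | G2, S1 => ((0)%Z,(0)%Z)
  | G2, S2 => ((0)%Z,(0)%Z)
  end.
Definition W0 (t:rtype) : list Zmat := match t with
  | A2 => ((1)%Z,(0)%Z,(0)%Z,(1)%Z) :: ((0)%Z,(-1)%Z,(-1)%Z,(0)%Z) :: ((-1)%Z,(0)%Z,(1)%Z,(1)%Z) :: ((1)%Z,(1)%Z,(0)%Z,(-1)%Z) :: ((0)%Z,(1)%Z,(-1)%Z,(-1)%Z) :: ((-1)%Z,(-1)%Z,(1)%Z,(0)%Z) :: nil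
  | B2 => ((1)%Z,(0)%Z,(0)%Z,(1)%Z) :: ((1)%Z,(0)%Z,(-1)%Z,(-1)%Z) :: ((-1)%Z,(0)%Z,(1)%Z,(1)%Z) :: ((1)%Z,(2)%Z,(0)%Z,(-1)%Z) :: ((-1)%Z,(0)%Z,(0)%Z,(-1)%Z) :: ((-1)%Z,(-2)%Z,(1)%Z,(1)%Z) :: ((1)%Z,(2)%Z,(-1)%Z,(-1)%Z) :: ((-1)%Z,(-2)%Z,(0)%Z,(1)%Z) :: nil
  | G2 => ((1)%Z,(0)%Z,(0)%Z,(1)%Z) :: ((1)%Z,(0)%Z,(-3)%Z,(-1)%Z) :: ((-1)%Z,(0)%Z,(3)%Z,(1)%Z) :: ((1)%Z,(1)%Z,(0)%Z,(-1)%Z) :: ((-1)%Z,(0)%Z,(0)%Z,(-1)%Z) :: ((-2)%Z,(-1)%Z,(3)%Z,(1)%Z) :: ((2)%Z,(1)%Z,(-3)%Z,(-1)%Z) :: ((1)%Z,(1)%Z,(-3)%Z,(-2)%Z) :: ((-1)%Z,(-1)%Z,(3)%Z,(2)%Z) :: ((-1)%Z,(-1)%Z,(0)%Z,(1)%Z) :: ((-2)%Z,(-1)%Z,(3)%Z,(2)%Z) :: ((2)%Z,(1)%Z,(-3)%Z,(-2)%Z) :: nil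
  end.
Definition Cm (t:rtype) : Zmat := match t with
  | A2 => ((2)%Z,(-1)%Z,(-1)%Z,(2)%Z)
  | B2 => ((2)%Z,(-2)%Z,(-1)%Z,(2)%Z)
  | G2 => ((2)%Z,(-1)%Z,(-3)%Z,(2)%Z)
  end.
Definition Mmat (t:rtype) (s:gen) : Zmat := match t, s with
  | A2, S0 => ((0)%Z,(-1)%Z,(-1)%Z,(0)%Z)
  | A2, S1 => ((-1)%Z,(1)%Z,(0)%Z,(1)%Z)
  | A2, S2 => ((1)%Z,(0)%Z,(1)%Z,(-1)%Z)
  | B2, S0 => ((1)%Z,(-2)%Z,(0)%Z,(-1)%Z)
  | B2, S1 => ((-1)%Z,(2)%Z,(0)%Z,(1)%Z)
  | B2, S2 => ((1)%Z,(0)%Z,(1)%Z,(-1)%Z)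
  | G2, S0 => ((1)%Z,(-1)%Z,(0)%Z,(-1)%Z)
  | G2, S1 => ((-1)%Z,(1)%Z,(0)%Z,(1)%Z)
  | G2, S2 => ((1)%Z,(0)%Z,(3)%Z,(-1)%Z)
  end.
Definition evec (t:rtype) (s:gen) : Z*Z := match t, s with
  | A2, S0 => ((1)%Z,(1)%Z)
  | A2, S1 => ((0)%Z,(0)%Z)
  | A2, S2 => ((0)%Z,(0)%Z)
  | B2, S0 => ((1)%Z,(1)%Z)
  | B2, S1 => ((0)%Z,(0)%Z)
  | B2, S2 => ((0)%Z,(0)%Z)
  | G2, S0 => ((1)%Z,(2)%Z)
  | G2, S1 => ((0)%Z,(0)%Z)
  | G2, S2 => ((0)%Z,(0)%Z)
  end.

Lemma P_simple t s v : P t (simple t s v) = Tint (Amat t s) (bvec t s) (P t v).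
Proof. destruct t, s, v; unfold P, simple, refl, theta, alpha1, alpha2, Tint; unfold ip; simpl;
  f_equal; field. Qed.

Lemma simple_invol t s v : simple t s (simple t s v) = v.
Proof. destruct t, s, v; unfold simple, refl, theta, alpha1, alpha2; unfold ip; simpl;
  f_equal; field. Qed.

Lemma Tint_comp A b g l y : Tint A b (Tint g l y) = Tint (matmul A g) (vaddZ (matvec A l) b) y.
Proof. destruct A as [[[a11 a12] a21] a22]; destruct g as [[[g11 g12] g21] g22]; destruct l, b, y.
  unfold Tint, matmul, matvec, vaddZ; simpl. rewrite !plus_IZR, !mult_IZR. f_equal; ring. Qed.

Definition Zmat_eqb (A B : Zmat) : bool :=
  let '(a11,a12,a21,a22) := A in let '(b11,b12,b21,b22) := B in
  (Z.eqb a11 b11 && Z.eqb a12 b12 && Z.eqb a21 b21 && Z.eqb a22 b22)%bool.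
Lemma Zmat_eqb_eq A B : Zmat_eqb A B = true -> A = B.
Proof. destruct A as [[[a11 a12] a21] a22]; destruct B as [[[b11 b12] b21] b22]; simpl.
  intros H. repeat rewrite andb_true_iff in H. destruct H as [[[H1 H2] H3] H4].
  apply Z.eqb_eq in H1, H2, H3, H4. subst; reflexivity. Qed.
Fixpoint memZ (A : Zmat) (l : list Zmat) : bool :=
  match l with nil => false | B :: l' => (Zmat_eqb A B || memZ A l')%bool end.
Lemma memZ_In A l : memZ A l = true -> In A l.
Proof. induction l; simpl; [discriminate|]. intros H. apply orb_true_iff in H as [H|H].
  - left; symmetry; apply Zmat_eqb_eq; auto. - right; auto. Qed.
Lemma forallb_In {T} (f : T -> bool) l x : forallb f l = true -> In x l -> f x = true.
Proof. intros H Hx. rewrite forallb_forall in H. auto. Qed.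

Lemma W0_closed t s : forallb (fun g => memZ (matmul (Amat t s) g) (W0 t)) (W0 t) = true.
Proof. destruct t, s; vm_compute; reflexivity. Qed.
Lemma latt_ok t s : matmul (Amat t s) (Cm t) = matmul (Cm t) (Mmat t s) /\ bvec t s = matvec (Cm t) (evec t s).
Proof. destruct t, s; split; vm_compute; reflexivity. Qed.

Lemma matvec_mul A B v : matvec A (matvec B v) = matvec (matmul A B) v.
Proof. destruct A as [[[a11 a12] a21] a22]; destruct B as [[[c11 c12] c21] c22]; destruct v; simpl; f_equal; ring. Qed.
Lemma matvec_add A u v : matvec A (vaddZ u v) = vaddZ (matvec A u) (matvec A v).
Proof. destruct A as [[[a11 a12] a21] a22]; destruct u, v; unfold vaddZ; simpl; f_equal; ring. Qed.
Lemma latt_step A C M b e i j : matmul A C = matmul C M -> b = matvec C e ->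
  vaddZ (matvec A (matvec C (i,j))) b = matvec C (vaddZ (matvec M (i,j)) e).
Proof. intros H ->. rewrite matvec_mul, H, <- matvec_mul, matvec_add. reflexivity. Qed.

Definition Inv t (f : E -> E) := exists g, In g (W0 t) /\ exists i j : Z,
  forall v, P t (f v) = Tint g (matvec (Cm t) (i,j)) (P t v).

Lemma Inv_id t : Inv t (fun v => v).
Proof. exists (1,0,0,1)%Z. split. { destruct t; simpl; auto. }
  exists 0%Z, 0%Z. intros v. destruct (P t v) as [y1 y2]. destruct t; unfold Tint; simpl; f_equal; ring. Qed.

Lemma Inv_step t s f : Inv t f -> Inv t (fun v => simple t s (f v)).
Proof. intros [g [Hg [i [j H]]]].
  exists (matmul (Amat t s) g). split.
  { apply memZ_In. exact (forallb_In _ _ _ (W0_closed t s) Hg). }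
  destruct (latt_ok t s) as [L1 L2].
  set (ij := vaddZ (matvec (Mmat t s) (i,j)) (evec t s)).
  exists (fst ij), (snd ij). intros v. rewrite P_simple, H, Tint_comp.
  rewrite (latt_step _ _ _ _ _ i j L1 L2). rewrite <- surjective_pairing. reflexivity. Qed.

Lemma word_Inv t w : Inv t (word_eval t w).
Proof. induction w as [|s w IH]; simpl. - apply Inv_id. - apply Inv_step; auto. Qed.

Lemma fl_posT b g z y m : pr b z = pr g y + IZR m -> fl (pr b z) = (fl (pr g y) + m)%Z.
Proof. intros H. rewrite H. apply fl_shift. Qed.
Lemma fl_negT b g z y m : gen1 (pr g y) -> pr b z = - pr g y + IZR m -> fl (pr b z) = (- fl (pr g y) - 1 + m)%Z.
Proof. intros G H. rewrite H, fl_shift, fl_neg; auto. Qed.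
Lemma fl_negT1 b g z y : gen1 (pr g y) -> pr b z = - pr g y + IZR 1 -> fl (pr b z) = (- fl (pr g y))%Z.
Proof. intros G H. rewrite (fl_negT b g z y 1 G H). lia. Qed.
Lemma gen_posT b g z y m : gen1 (pr g y) -> pr b z = pr g y + IZR m -> gen1 (pr b z).
Proof. intros G H n Hn. apply (G (n - m)%Z). rewrite minus_IZR. lra. Qed.
Lemma gen_negT b g z y m : gen1 (pr g y) -> pr b z = - pr g y + IZR m -> gen1 (pr b z).
Proof. intros G H n Hn. apply (G (m - n)%Z). rewrite minus_IZR. lra. Qed.

Definition rho t s : E := match s with S0 => theta t | S1 => (1,0) | S2 => (0,1) end.
Definition um (s:gen) : Z := match s with S0 => 2%Z | _ => 0%Z end.

Lemma Fstep t s y : generic t y ->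
  F t (Tint (Amat t s) (bvec t s) y) =
  (F t y - Z.abs (fl (pr (rho t s) y)) + Z.abs (- fl (pr (rho t s) y) - 1 + um s))%Z.
Proof. intros Hg. unfold F, Fl. destruct t, s; cbn [pos_roots fold_right rho theta um].
- rewrite (fl_negT1 (1,0) (0,1) (Tint (Amat A2 S0) (bvec A2 S0) y) y (Hg (0,1) ltac:(inpos)) ltac:(unfold pr, Tint; simpl; ring)), Z.abs_opp. rewrite (fl_negT1 (0,1) (1,0) (Tint (Amat A2 S0) (bvec A2 S0) y) y (Hg (1,0) ltac:(inpos)) ltac:(unfold pr, Tint; simpl; ring)), Z.abs_opp. rewrite (fl_negT (1,1) (1,1) (Tint (Amat A2 S0) (bvec A2 S0) y) y (2)%Z (Hg (1,1) ltac:(inpos)) ltac:(unfold pr, Tint; simpl; ring)). rewrite ?Z.add_0_r. ring.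
- rewrite (fl_negT (1,0) (1,0) (Tint (Amat A2 S1) (bvec A2 S1) y) y (0)%Z (Hg (1,0) ltac:(inpos)) ltac:(unfold pr, Tint; simpl; ring)). rewrite (fl_posT (0,1) (1,1) (Tint (Amat A2 S1) (bvec A2 S1) y) y (0)%Z ltac:(unfold pr, Tint; simpl; ring)). rewrite (fl_posT (1,1) (0,1) (Tint (Amat A2 S1) (bvec A2 S1) y) y (0)%Z ltac:(unfold pr, Tint; simpl; ring)). rewrite ?Z.add_0_r. ring.
- rewrite (fl_posT (1,0) (1,1) (Tint (Amat A2 S2) (bvec A2 S2) y) y (0)%Z ltac:(unfold pr, Tint; simpl; ring)). rewrite (fl_negT (0,1) (0,1) (Tint (Amat A2 S2) (bvec A2 S2) y) y (0)%Z (Hg (0,1) ltac:(inpos)) ltac:(unfold pr, Tint; simpl; ring)). rewrite (fl_posT (1,1) (1,0) (Tint (Amat A2 S2) (bvec A2 S2) y) y (0)%Z ltac:(unfold pr, Tint; simpl; ring)). rewrite ?Z.add_0_r. ring.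
- rewrite (fl_posT (1,0) (1,0) (Tint (Amat B2 S0) (bvec B2 S0) y) y (0)%Z ltac:(unfold pr, Tint; simpl; ring)). rewrite (fl_negT1 (0,1) (1,1) (Tint (Amat B2 S0) (bvec B2 S0) y) y (Hg (1,1) ltac:(inpos)) ltac:(unfold pr, Tint; simpl; ring)), Z.abs_opp. rewrite (fl_negT1 (1,1) (0,1) (Tint (Amat B2 S0) (bvec B2 S0) y) y (Hg (0,1) ltac:(inpos)) ltac:(unfold pr, Tint; simpl; ring)), Z.abs_opp. rewrite (fl_negT (1,2) (1,2) (Tint (Amat B2 S0) (bvec B2 S0) y) y (2)%Z (Hg (1,2) ltac:(inpos)) ltac:(unfold pr, Tint; simpl; ring)). rewrite ?Z.add_0_r. ring.
- rewrite (fl_negT (1,0) (1,0) (Tint (Amat B2 S1) (bvec B2 S1) y) y (0)%Z (Hg (1,0) ltac:(inpos)) ltac:(unfold pr, Tint; simpl; ring)). rewrite (fl_posT (0,1) (1,1) (Tint (Amat B2 S1) (bvec B2 S1) y) y (0)%Z ltac:(unfold pr, Tint; simpl; ring)). rewrite (fl_posT (1,1) (0,1) (Tint (Amat B2 S1) (bvec B2 S1) y) y (0)%Z ltac:(unfold pr, Tint; simpl; ring)). rewrite (fl_posT (1,2) (1,2) (Tint (Amat B2 S1) (bvec B2 S1) y) y (0)%Z ltac:(unfold pr, Tint; simpl; ring)). rewrite ?Z.add_0_r. ring.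
- rewrite (fl_posT (1,0) (1,2) (Tint (Amat B2 S2) (bvec B2 S2) y) y (0)%Z ltac:(unfold pr, Tint; simpl; ring)). rewrite (fl_negT (0,1) (0,1) (Tint (Amat B2 S2) (bvec B2 S2) y) y (0)%Z (Hg (0,1) ltac:(inpos)) ltac:(unfold pr, Tint; simpl; ring)). rewrite (fl_posT (1,1) (1,1) (Tint (Amat B2 S2) (bvec B2 S2) y) y (0)%Z ltac:(unfold pr, Tint; simpl; ring)). rewrite (fl_posT (1,2) (1,0) (Tint (Amat B2 S2) (bvec B2 S2) y) y (0)%Z ltac:(unfold pr, Tint; simpl; ring)). rewrite ?Z.add_0_r. ring.
- rewrite (fl_posT (1,0) (1,0) (Tint (Amat G2 S0) (bvec G2 S0) y) y (0)%Z ltac:(unfold pr, Tint; simpl; ring)). rewrite (fl_negT1 (0,1) (3,1) (Tint (Amat G2 S0) (bvec G2 S0) y) y (Hg (3,1) ltac:(inpos)) ltac:(unfold pr, Tint; simpl; ring)), Z.abs_opp. rewrite (fl_negT1 (1,1) (2,1) (Tint (Amat G2 S0) (bvec G2 S0) y) y (Hg (2,1) ltac:(inpos)) ltac:(unfold pr, Tint; simpl; ring)), Z.abs_opp. rewrite (fl_negT1 (2,1) (1,1) (Tint (Amat G2 S0) (bvec G2 S0) y) y (Hg (1,1) ltac:(inpos)) ltac:(unfold pr, Tint; simpl; ring)), Z.abs_opp. rewrite (fl_negT1 (3,1) (0,1) (Tint (Amat G2 S0) (bvec G2 S0) y) y (Hg (0,1) ltac:(inpos)) ltac:(unfold pr,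 Tint; simpl; ring)), Z.abs_opp. rewrite (fl_negT (3,2) (3,2) (Tint (Amat G2 S0) (bvec G2 S0) y) y (2)%Z (Hg (3,2) ltac:(inpos)) ltac:(unfold pr, Tint; simpl; ring)). rewrite ?Z.add_0_r. ring.
- rewrite (fl_negT (1,0) (1,0) (Tint (Amat G2 S1) (bvec G2 S1) y) y (0)%Z (Hg (1,0) ltac:(inpos)) ltac:(unfold pr, Tint; simpl; ring)). rewrite (fl_posT (0,1) (3,1) (Tint (Amat G2 S1) (bvec G2 S1) y) y (0)%Z ltac:(unfold pr, Tint; simpl; ring)). rewrite (fl_posT (1,1) (2,1) (Tint (Amat G2 S1) (bvec G2 S1) y) y (0)%Z ltac:(unfold pr, Tint; simpl; ring)). rewrite (fl_posT (2,1) (1,1) (Tint (Amat G2 S1) (bvec G2 S1) y) y (0)%Z ltac:(unfold pr, Tint; simpl; ring)). rewrite (fl_posT (3,1) (0,1) (Tint (Amat G2 S1) (bvec G2 S1) y) y (0)%Z ltac:(unfold pr, Tint; simpl; ring)). rewrite (fl_posT (3,2) (3,2) (Tint (Amat G2 S1) (bvec G2 S1) y) y (0)%Z ltac:(unfold pr, Tint; simpl; ring)). rewrite ?Z.add_0_r. ring.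
- rewrite (fl_posT (1,0) (1,1) (Tint (Amat G2 S2) (bvec G2 S2) y) y (0)%Z ltac:(unfold pr, Tint; simpl; ring)). rewrite (fl_negT (0,1) (0,1) (Tint (Amat G2 S2) (bvec G2 S2) y) y (0)%Z (Hg (0,1) ltac:(inpos)) ltac:(unfold pr, Tint; simpl; ring)). rewrite (fl_posT (1,1) (1,0) (Tint (Amat G2 S2) (bvec G2 S2) y) y (0)%Z ltac:(unfold pr, Tint; simpl; ring)). rewrite (fl_posT (2,1) (2,1) (Tint (Amat G2 S2) (bvec G2 S2) y) y (0)%Z ltac:(unfold pr, Tint; simpl; ring)). rewrite (fl_posT (3,1) (3,2) (Tint (Amat G2 S2) (bvec G2 S2) y) y (0)%Z ltac:(unfold pr, Tint; simpl; ring)). rewrite (fl_posT (3,2) (3,1) (Tint (Amat G2 S2) (bvec G2 S2) y) y (0)%Z ltac:(unfold pr, Tint; simpl; ring)). rewrite ?Z.add_0_r. ring.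
Qed.

Lemma gen_step t s y : generic t y -> generic t (Tint (Amat t s) (bvec t s) y).
Proof. intros Hg b Hb. destruct t, s; simpl in Hb; repeat destruct Hb as [<-|Hb]; try contradiction.
  - apply (gen_negT (1,0) (0,1) (Tint (Amat A2 S0) (bvec A2 S0) y) y (1)%Z (Hg (0,1) ltac:(inpos)) ltac:(unfold pr, Tint; simpl; ring)).
  - apply (gen_negT (0,1) (1,0) (Tint (Amat A2 S0) (bvec A2 S0) y) y (1)%Z (Hg (1,0) ltac:(inpos)) ltac:(unfold pr, Tint; simpl; ring)).
  - apply (gen_negT (1,1) (1,1) (Tint (Amat A2 S0) (bvec A2 S0) y) y (2)%Z (Hg (1,1) ltac:(inpos)) ltac:(unfold pr, Tint; simpl; ring)).
  - apply (gen_negT (1,0) (1,0) (Tint (Amat A2 S1) (bvec A2 S1) y) y (0)%Z (Hg (1,0) ltac:(inpos)) ltac:(unfold pr, Tint; simpl; ring)).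
  - apply (gen_posT (0,1) (1,1) (Tint (Amat A2 S1) (bvec A2 S1) y) y (0)%Z (Hg (1,1) ltac:(inpos)) ltac:(unfold pr, Tint; simpl; ring)).
  - apply (gen_posT (1,1) (0,1) (Tint (Amat A2 S1) (bvec A2 S1) y) y (0)%Z (Hg (0,1) ltac:(inpos)) ltac:(unfold pr, Tint; simpl; ring)).
  - apply (gen_posT (1,0) (1,1) (Tint (Amat A2 S2) (bvec A2 S2) y) y (0)%Z (Hg (1,1) ltac:(inpos)) ltac:(unfold pr, Tint; simpl; ring)).
  - apply (gen_negT (0,1) (0,1) (Tint (Amat A2 S2) (bvec A2 S2) y) y (0)%Z (Hg (0,1) ltac:(inpos)) ltac:(unfold pr, Tint; simpl; ring)).
  - apply (gen_posT (1,1) (1,0) (Tint (Amat A2 S2) (bvec A2 S2) y) y (0)%Z (Hg (1,0) ltac:(inpos)) ltac:(unfold pr, Tint; simpl; ring)).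
  - apply (gen_posT (1,0) (1,0) (Tint (Amat B2 S0) (bvec B2 S0) y) y (0)%Z (Hg (1,0) ltac:(inpos)) ltac:(unfold pr, Tint; simpl; ring)).
  - apply (gen_negT (0,1) (1,1) (Tint (Amat B2 S0) (bvec B2 S0) y) y (1)%Z (Hg (1,1) ltac:(inpos)) ltac:(unfold pr, Tint; simpl; ring)).
  - apply (gen_negT (1,1) (0,1) (Tint (Amat B2 S0) (bvec B2 S0) y) y (1)%Z (Hg (0,1) ltac:(inpos)) ltac:(unfold pr, Tint; simpl; ring)).
  - apply (gen_negT (1,2) (1,2) (Tint (Amat B2 S0) (bvec B2 S0) y) y (2)%Z (Hg (1,2) ltac:(inpos)) ltac:(unfold pr, Tint; simpl; ring)).
  - apply (gen_negT (1,0) (1,0) (Tint (Amat B2 S1) (bvec B2 S1) y) y (0)%Z (Hg (1,0) ltac:(inpos)) ltac:(unfold pr, Tint; simpl; ring)).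
  - apply (gen_posT (0,1) (1,1) (Tint (Amat B2 S1) (bvec B2 S1) y) y (0)%Z (Hg (1,1) ltac:(inpos)) ltac:(unfold pr, Tint; simpl; ring)).
  - apply (gen_posT (1,1) (0,1) (Tint (Amat B2 S1) (bvec B2 S1) y) y (0)%Z (Hg (0,1) ltac:(inpos)) ltac:(unfold pr, Tint; simpl; ring)).
  - apply (gen_posT (1,2) (1,2) (Tint (Amat B2 S1) (bvec B2 S1) y) y (0)%Z (Hg (1,2) ltac:(inpos)) ltac:(unfold pr, Tint; simpl; ring)).
  - apply (gen_posT (1,0) (1,2) (Tint (Amat B2 S2) (bvec B2 S2) y) y (0)%Z (Hg (1,2) ltac:(inpos)) ltac:(unfold pr, Tint; simpl; ring)).
  - apply (gen_negT (0,1) (0,1) (Tint (Amat B2 S2) (bvec B2 S2) y) y (0)%Z (Hg (0,1) ltac:(inpos)) ltac:(unfold pr, Tint; simpl; ring)).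
  - apply (gen_posT (1,1) (1,1) (Tint (Amat B2 S2) (bvec B2 S2) y) y (0)%Z (Hg (1,1) ltac:(inpos)) ltac:(unfold pr, Tint; simpl; ring)).
  - apply (gen_posT (1,2) (1,0) (Tint (Amat B2 S2) (bvec B2 S2) y) y (0)%Z (Hg (1,0) ltac:(inpos)) ltac:(unfold pr, Tint; simpl; ring)).
  - apply (gen_posT (1,0) (1,0) (Tint (Amat G2 S0) (bvec G2 S0) y) y (0)%Z (Hg (1,0) ltac:(inpos)) ltac:(unfold pr, Tint; simpl; ring)).
  - apply (gen_negT (0,1) (3,1) (Tint (Amat G2 S0) (bvec G2 S0) y) y (1)%Z (Hg (3,1) ltac:(inpos)) ltac:(unfold pr, Tint; simpl; ring)).
  - apply (gen_negT (1,1) (2,1) (Tint (Amat G2 S0) (bvec G2 S0) y) y (1)%Z (Hg (2,1) ltac:(inpos)) ltac:(unfold pr, Tint; simpl; ring)).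
  - apply (gen_negT (2,1) (1,1) (Tint (Amat G2 S0) (bvec G2 S0) y) y (1)%Z (Hg (1,1) ltac:(inpos)) ltac:(unfold pr, Tint; simpl; ring)).
  - apply (gen_negT (3,1) (0,1) (Tint (Amat G2 S0) (bvec G2 S0) y) y (1)%Z (Hg (0,1) ltac:(inpos)) ltac:(unfold pr, Tint; simpl; ring)).
  - apply (gen_negT (3,2) (3,2) (Tint (Amat G2 S0) (bvec G2 S0) y) y (2)%Z (Hg (3,2) ltac:(inpos)) ltac:(unfold pr, Tint; simpl; ring)).
  - apply (gen_negT (1,0) (1,0) (Tint (Amat G2 S1) (bvec G2 S1) y) y (0)%Z (Hg (1,0) ltac:(inpos)) ltac:(unfold pr, Tint; simpl; ring)).
  - apply (gen_posT (0,1) (3,1) (Tint (Amat G2 S1) (bvec G2 S1) y) y (0)%Z (Hg (3,1) ltac:(inpos)) ltac:(unfold pr, Tint; simpl; ring)).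
  - apply (gen_posT (1,1) (2,1) (Tint (Amat G2 S1) (bvec G2 S1) y) y (0)%Z (Hg (2,1) ltac:(inpos)) ltac:(unfold pr, Tint; simpl; ring)).
  - apply (gen_posT (2,1) (1,1) (Tint (Amat G2 S1) (bvec G2 S1) y) y (0)%Z (Hg (1,1) ltac:(inpos)) ltac:(unfold pr, Tint; simpl; ring)).
  - apply (gen_posT (3,1) (0,1) (Tint (Amat G2 S1) (bvec G2 S1) y) y (0)%Z (Hg (0,1) ltac:(inpos)) ltac:(unfold pr, Tint; simpl; ring)).
  - apply (gen_posT (3,2) (3,2) (Tint (Amat G2 S1) (bvec G2 S1) y) y (0)%Z (Hg (3,2) ltac:(inpos)) ltac:(unfold pr, Tint; simpl; ring)).
  - apply (gen_posT (1,0) (1,1) (Tint (Amat G2 S2) (bvec G2 S2) y) y (0)%Z (Hg (1,1) ltac:(inpos)) ltac:(unfold pr, Tint; simpl; ring)).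
  - apply (gen_negT (0,1) (0,1) (Tint (Amat G2 S2) (bvec G2 S2) y) y (0)%Z (Hg (0,1) ltac:(inpos)) ltac:(unfold pr, Tint; simpl; ring)).
  - apply (gen_posT (1,1) (1,0) (Tint (Amat G2 S2) (bvec G2 S2) y) y (0)%Z (Hg (1,0) ltac:(inpos)) ltac:(unfold pr, Tint; simpl; ring)).
  - apply (gen_posT (2,1) (2,1) (Tint (Amat G2 S2) (bvec G2 S2) y) y (0)%Z (Hg (2,1) ltac:(inpos)) ltac:(unfold pr, Tint; simpl; ring)).
  - apply (gen_posT (3,1) (3,2) (Tint (Amat G2 S2) (bvec G2 S2) y) y (0)%Z (Hg (3,2) ltac:(inpos)) ltac:(unfold pr, Tint; simpl; ring)).
  - apply (gen_posT (3,2) (3,1) (Tint (Amat G2 S2) (bvec G2 S2) y) y (0)%Z (Hg (3,1) ltac:(inpos)) ltac:(unfold pr, Tint; simpl; ring)).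
Qed.

Definition p0 (t:rtype) : E := match t with A2 => (1/100, 1/100) | B2 => (2/100, 3/100) | G2 => (3/100, 1/60) end.
Lemma P_p0 t : P t (p0 t) = (1/100, 1/100).
Proof. destruct t; unfold P, p0, alpha1, alpha2; unfold ip; simpl; f_equal; field. Qed.
Lemma A0_p0 t : A0 t (p0 t).
Proof. destruct t; unfold A0, p0, alpha1, alpha2, theta; unfold ip; simpl; lra. Qed.

Lemma gen01 r : 0 < r < 1 -> gen1 r.
Proof. intros [H1 H2] n Hn. subst. apply lt_IZR in H1. apply lt_IZR in H2. lia. Qed.
Lemma fl01 r : 0 <= r < 1 -> fl r = 0%Z.
Proof. intros H. apply fl_unique. simpl. lra. Qed.

Lemma gen_p0 t : generic t (1/100, 1/100).
Proof. intros b Hb. destruct t; simpl in Hb; repeat destruct Hb as [<-|Hb]; try contradiction;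
  apply gen01; unfold pr; simpl; lra. Qed.
Lemma F_p0 t : F t (1/100, 1/100) = 0%Z.
Proof. unfold F, Fl; destruct t; cbn [pos_roots fold_right]; rewrite !fl01 by (unfold pr; simpl; lra); reflexivity. Qed.

Lemma Fzero t y : 0 <= fst y -> 0 <= snd y -> pr (theta t) y < 1 -> F t y = 0%Z.
Proof. intros H1 H2 H3. unfold F, Fl; destruct t; unfold theta in H3; cbn [pos_roots fold_right];
  rewrite !fl01 by (unfold pr in *; simpl in *; lra); reflexivity. Qed.

Lemma Fl_nonneg l y : (0 <= Fl l y)%Z.
Proof. induction l; simpl; lia. Qed.
Lemma Fl_zero l y b : Fl l y = 0%Z -> In b l -> fl (pr b y) = 0%Z.
Proof. induction l as [|a l IH]; simpl; [tauto|]. intros H [<-|Hb].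
  - pose proof (Fl_nonneg l y). lia.
  - apply IH; auto. pose proof (Fl_nonneg l y). lia. Qed.

Definition rowsum_ok (g:Zmat) : bool := let '(a,b,c,d) := g in ((Z.abs (a+b) <=? 5) && (Z.abs (c+d) <=? 5))%Z.
Definition id_ok (g:Zmat) : bool := let '(a,b,c,d) := g in
  implb ((0 <? a+b) && (0 <? c+d))%Z (Zmat_eqb g (1,0,0,1)%Z).
Lemma W0_ok t : forallb (fun g => rowsum_ok g && id_ok g) (W0 t) = true.
Proof. destruct t; vm_compute; reflexivity. Qed.

Lemma int_lb (n:Z) : -1 < IZR n -> (0 <= n)%Z.
Proof. intros H. apply lt_IZR in H. lia. Qed.
Lemma int_ub (n:Z) : IZR n < 2 -> (n <= 1)%Z.
Proof. intros H. apply lt_IZR in H. lia. Qed.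

Lemma P_inj t u v : P t u = P t v -> u = v.
Proof. destruct t, u, v; unfold P, alpha1, alpha2; unfold ip; simpl; intros Heq; injection Heq; intros; f_equal; lra. Qed.

Lemma base t f : Inv t f -> 0 < fst (P t (f (p0 t))) -> 0 < snd (P t (f (p0 t))) ->
  pr (theta t) (P t (f (p0 t))) < 1 -> forall v, f v = v.
Proof. intros [g [Hg [i [j H]]]] H1 H2 H3 v.
  rewrite H, P_p0 in H1, H2, H3.
  pose proof (forallb_In _ _ _ (W0_ok t) Hg) as Hok.
  destruct (matvec (Cm t) (i,j)) as [l1 l2] eqn:El.
  destruct g as [[[a b] c] d].
  unfold rowsum_ok, id_ok in Hok. apply andb_true_iff in Hok as [Hr Hid].
  apply andb_true_iff in Hr as [Hr1 Hr2]. apply Z.leb_le in Hr1, Hr2.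
  assert (Rab: -5 <= IZR (a+b) <= 5) by (split; apply IZR_le; lia).
  assert (Rcd: -5 <= IZR (c+d) <= 5) by (split; apply IZR_le; lia).
  rewrite plus_IZR in Rab, Rcd.
  unfold Tint in H1, H2, H3; cbn [fst snd] in H1, H2, H3.
  assert (L1 : (0 <= l1)%Z) by (apply int_lb; lra).
  assert (L2 : (0 <= l2)%Z) by (apply int_lb; lra).
  assert (Hl : l1 = 0%Z /\ l2 = 0%Z).
  { destruct t; unfold theta, pr in H3; simpl in H3; cbn [matvec Cm fst snd] in El; apply pair_equal_spec in El; destruct El as [E1 E2].
    - assert (l1 + l2 <= 1)%Z by (apply int_ub; rewrite plus_IZR; lra). lia.
    - assert (l1 + 2*l2 <= 1)%Z by (apply int_ub; rewrite plus_IZR, mult_IZR; lra). lia.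
    - assert (3*l1 + 2*l2 <= 1)%Z by (apply int_ub; rewrite plus_IZR, !mult_IZR; lra). lia. }
  destruct Hl as [-> ->].
  assert (Pab : (0 < a + b)%Z) by (apply lt_IZR; rewrite plus_IZR; simpl in H1; lra).
  assert (Pcd : (0 < c + d)%Z) by (apply lt_IZR; rewrite plus_IZR; simpl in H2; lra).
  apply Z.ltb_lt in Pab, Pcd. rewrite Pab, Pcd in Hid. cbn [implb andb] in Hid.
  apply Zmat_eqb_eq in Hid. injection Hid as -> -> -> ->.
  apply (P_inj t). rewrite H. destruct (P t v) as [y1 y2]. unfold Tint; simpl; f_equal; ring.
Qed.

Lemma descent t y : generic t y -> (F t y > 0)%Z ->
  exists s, F t (Tint (Amat t s) (bvec t s) y) = (F t y - 1)%Z.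
Proof. intros Hg HF.
  destruct (Z_lt_le_dec (fl (pr (1,0) y)) 0) as [C1|C1].
  { exists S1. rewrite Fstep by auto. simpl. lia. }
  destruct (Z_lt_le_dec (fl (pr (0,1) y)) 0) as [C2|C2].
  { exists S2. rewrite Fstep by auto. simpl. lia. }
  destruct (Z_le_gt_dec 1 (fl (pr (theta t) y))) as [C3|C3].
  { exists S0. rewrite Fstep by auto. simpl. lia. }
  exfalso. pose proof (fl_spec (pr (1,0) y)); pose proof (fl_spec (pr (0,1) y));
  pose proof (fl_spec (pr (theta t) y)).
  apply IZR_le in C1, C2. assert (IZR (fl (pr (theta t) y)) <= 0) by (apply IZR_le; lia).
  rewrite Fzero in HF; [lia| | |]; unfold pr in *; simpl in *; lra.
Qed.

Lemma word_eval_cons t s w v : word_eval t (s :: w) v = simple t s (word_eval t w v).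
Proof. reflexivity. Qed.

Lemma word_props t w : generic t (P t (word_eval t w (p0 t))) /\
  exists k:nat, (F t (P t (word_eval t w (p0 t))) + 2 * Z.of_nat k = Z.of_nat (length w))%Z.
Proof. induction w as [|s w [IG [k IK]]].
  - simpl. rewrite P_p0. split; [apply gen_p0|]. exists 0%nat. rewrite F_p0. reflexivity.
  - rewrite word_eval_cons, P_simple. cbn [length]. split; [apply gen_step; auto|].
    assert (D: F t (Tint (Amat t s) (bvec t s) (P t (word_eval t w (p0 t)))) = (F t (P t (word_eval t w (p0 t))) + 1)%Z \/
               F t (Tint (Amat t s) (bvec t s) (P t (word_eval t w (p0 t)))) = (F t (P t (word_eval t w (p0 t))) - 1)%Z)
      by (rewrite Fstep by auto; destruct s; simpl; lia).
    destruct D as [D|D]; rewrite D.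
    + exists k. lia.
    + exists (S k). lia.
Qed.

Lemma pr10 z : pr (1,0) z = fst z.
Proof. unfold pr; simpl; ring. Qed.
Lemma pr01 z : pr (0,1) z = snd z.
Proof. unfold pr; simpl; ring. Qed.

Lemma exist_word t N : forall w, F t (P t (word_eval t w (p0 t))) = Z.of_nat N ->
  exists w', (forall v, word_eval t w v = word_eval t w' v) /\ length w' = N.
Proof. induction N as [|N IH]; intros w HF.
  - exists nil. split; [|reflexivity]. intros v; change (word_eval t nil v) with v; revert v.
    destruct (word_props t w) as [Hg _].
    set (y := P t (word_eval t w (p0 t))) in *.
    assert (Z0 : forall b, In b (pos_roots t) -> 0 < pr b y < 1).
    { intros b Hb. pose proof (Fl_zero _ _ b HF Hb) as Hz. pose proof (fl_spec (pr b y)). rewrite Hz in H.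
      assert (pr b y <> 0) by (apply (Hg b Hb 0%Z)). simpl in H. lra. }
    apply (base t); [apply word_Inv| | |].
    + assert (H := Z0 (1,0) ltac:(destruct t; inpos)). rewrite pr10 in H. cbv beta; fold y. lra.
    + assert (H := Z0 (0,1) ltac:(destruct t; inpos)). rewrite pr01 in H. cbv beta; fold y. lra.
    + assert (H := Z0 (theta t) ltac:(destruct t; inpos)). cbv beta; fold y; lra.
  - destruct (word_props t w) as [Hg _].
    destruct (descent t _ Hg) as [s Hs]; [lia|].
    destruct (IH (s :: w)) as [w'' [H1 H2]].
    { simpl. rewrite P_simple, Hs, HF. lia. }
    exists (s :: w''). split; [|simpl; lia].
    intros v. simpl. rewrite <- H1. simpl. rewrite simple_invol. reflexivity.
Qed.

Lemma len_F t x n : coxeter_length t x n ->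
  (Z.of_nat n = F t (P t (x (p0 t))))%Z /\ generic t (P t (x (p0 t))) /\ exists w, represents t w x /\ length w = n.
Proof. intros [[w [Hl Hr]] Hmin].
  rewrite (Hr (p0 t)).
  destruct (word_props t w) as [Hg [k Hk]].
  pose proof (Fl_nonneg (pos_roots t) (P t (word_eval t w (p0 t)))) as Hnn. fold (F t (P t (word_eval t w (p0 t)))) in Hnn.
  destruct (exist_word t (Z.to_nat (F t (P t (word_eval t w (p0 t))))) w) as [w' [H1 H2]]; [lia|].
  assert (n <= length w')%nat by (apply Hmin; intros v; rewrite Hr; auto).
  split; [lia|]. split; auto. exists w; split; auto.
Qed.

Lemma len_intro t x w m : represents t w x -> F t (P t (x (p0 t))) = Z.of_nat m -> coxeter_length t x m.
Proof. intros Hr HF. rewrite (Hr (p0 t)) in HF. split.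
  - destruct (exist_word t m w HF) as [w' [H1 H2]]. exists w'. split; auto. intros v. rewrite Hr; auto.
  - intros w2 Hr2. destruct (word_props t w2) as [_ [k Hk]].
    rewrite <- (Hr2 (p0 t)), (Hr (p0 t)) in Hk. lia.
Qed.

Lemma len_parity t x w : represents t w x -> exists k:nat, (F t (P t (x (p0 t))) + 2 * Z.of_nat k = Z.of_nat (length w))%Z.
Proof. intros Hr. rewrite (Hr (p0 t)). apply word_props. Qed.

Ltac phicase t H := destruct t; unfold Phi in H; simpl in H; repeat destruct H as [<-|H]; try contradiction.

Lemma P_refl t a d v : In a (Phi t) -> P t (refl t a (IZR d) v) = sref t a d (P t v).
Proof. intros H. phicase t H; destruct v; unfold P, refl, sref, kap, pr, alpha1, alpha2; unfold ip; simpl; f_equal; field. Qed.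

Lemma kap_int t a : In a (Phi t) -> exists k1 k2 : Z, kap t a = (IZR k1, IZR k2).
Proof. intros H. phicase t H.
  - exists (2)%Z, (-1)%Z; unfold kap; unfold ip; simpl; f_equal; field.
  - exists (-1)%Z, (2)%Z; unfold kap; unfold ip; simpl; f_equal; field.
  - exists (1)%Z, (1)%Z; unfold kap; unfold ip; simpl; f_equal; field.
  - exists (-2)%Z, (1)%Z; unfold kap; unfold ip; simpl; f_equal; field.
  - exists (1)%Z, (-2)%Z; unfold kap; unfold ip; simpl; f_equal; field.
  - exists (-1)%Z, (-1)%Z; unfold kap; unfold ip; simpl; f_equal; field.
  - exists (2)%Z, (-1)%Z; unfold kap; unfold ip; simpl; f_equal; field.
  - exists (-2)%Z, (2)%Z; unfold kap; unfold ip; simpl; f_equal; field.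
  - exists (2)%Z, (0)%Z; unfold kap; unfold ip; simpl; f_equal; field.
  - exists (0)%Z, (1)%Z; unfold kap; unfold ip; simpl; f_equal; field.
  - exists (-2)%Z, (1)%Z; unfold kap; unfold ip; simpl; f_equal; field.
  - exists (2)%Z, (-2)%Z; unfold kap; unfold ip; simpl; f_equal; field.
  - exists (-2)%Z, (0)%Z; unfold kap; unfold ip; simpl; f_equal; field.
  - exists (0)%Z, (-1)%Z; unfold kap; unfold ip; simpl; f_equal; field.
  - exists (2)%Z, (-3)%Z; unfold kap; unfold ip; simpl; f_equal; field.
  - exists (-1)%Z, (2)%Z; unfold kap; unfold ip; simpl; f_equal; field.
  - exists (-1)%Z, (3)%Z; unfold kap; unfold ip; simpl; f_equal; field.
  - exists (1)%Z, (0)%Z; unfold kap; unfold ip; simpl; f_equal; field.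
  - exists (1)%Z, (-1)%Z; unfold kap; unfold ip; simpl; f_equal; field.
  - exists (0)%Z, (1)%Z; unfold kap; unfold ip; simpl; f_equal; field.
  - exists (-2)%Z, (3)%Z; unfold kap; unfold ip; simpl; f_equal; field.
  - exists (1)%Z, (-2)%Z; unfold kap; unfold ip; simpl; f_equal; field.
  - exists (1)%Z, (-3)%Z; unfold kap; unfold ip; simpl; f_equal; field.
  - exists (-1)%Z, (0)%Z; unfold kap; unfold ip; simpl; f_equal; field.
  - exists (-1)%Z, (1)%Z; unfold kap; unfold ip; simpl; f_equal; field.
  - exists (0)%Z, (-1)%Z; unfold kap; unfold ip; simpl; f_equal; field.
Qed.

Lemma kap_2 t a : In a (Phi t) -> pr a (kap t a) = 2.
Proof. intros H. phicase t H; unfold kap, pr; unfold ip; simpl; field. Qed.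

Lemma pos_intvec t b : In b (pos_roots t) -> intvec b.
Proof. intros H. destruct t; simpl in H; repeat destruct H as [<-|H]; try contradiction; do 2 eexists; reflexivity. Qed.

Lemma Phi_split t a : In a (Phi t) -> In a (pos_roots t) \/ exists b, In b (pos_roots t) /\ a = vopp b.
Proof. intros H. unfold Phi in H. apply in_app_or in H as [H|H]; [left; auto|right].
  apply in_map_iff in H as [b [<- Hb]]. exists b; auto. Qed.

Lemma pr_vopp b y : pr (vopp b) y = - pr b y.
Proof. unfold pr, vopp; simpl; ring. Qed.

Lemma generic_Phi t y a : generic t y -> In a (Phi t) -> gen1 (pr a y).
Proof. intros G H. destruct (Phi_split t a H) as [Hp|[b [Hb ->]]].
  - exact (G a Hp).
  - intros n Hn. rewrite pr_vopp in Hn. apply (G b Hb (-n)%Z). rewrite opp_IZR. lra. Qed.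

Lemma eval_app t l1 l2 v : word_eval t (l1 ++ l2) v = word_eval t l1 (word_eval t l2 v).
Proof. induction l1 as [|s l1 IH]; [reflexivity|]. rewrite <- app_comm_cons, !word_eval_cons, IH. reflexivity. Qed.
Lemma eval_rev_l t w v : word_eval t (rev w) (word_eval t w v) = v.
Proof. revert v; induction w as [|s w IH]; intros v; [reflexivity|].
  simpl rev. rewrite eval_app, !word_eval_cons. change (word_eval t nil ?u) with u.
  rewrite simple_invol. apply IH. Qed.
Lemma eval_rev_r t w v : word_eval t w (word_eval t (rev w) v) = v.
Proof. rewrite <- (rev_involutive w) at 1. apply eval_rev_l. Qed.

Lemma pr_vsh b y s k : pr b (vsh y s k) = pr b y + s * pr b k.
Proof. unfold pr, vsh; simpl; ring. Qed.

Lemma sref_sref t a d1 d2 y : pr a (kap t a) = 2 ->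
  sref t a d2 (sref t a d1 y) = vsh y (IZR d2 - IZR d1) (kap t a) /\
  pr a (sref t a d1 y) = 2 * IZR d1 - pr a y.
Proof. intros K. assert (E : pr a (sref t a d1 y) = 2 * IZR d1 - pr a y) by (rewrite pr_sref, K; ring).
  split; auto. unfold sref at 1. rewrite E. unfold sref, vsh. simpl. f_equal; ring. Qed.

Lemma refl_triple t a c v : In a (Phi t) ->
  refl t a (IZR c + 1) (refl t a (IZR c + 2) (refl t a (IZR c + 1) v)) = refl t a (IZR c) v.
Proof. intros H. apply (P_inj t).
  replace (IZR c + 1) with (IZR (c+1)) by (rewrite plus_IZR; reflexivity).
  replace (IZR c + 2) with (IZR (c+2)) by (rewrite plus_IZR; reflexivity).
  rewrite !P_refl by auto. pose proof (kap_2 t a H) as K.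
  destruct (sref_sref t a (c+1) (c+2) (P t v) K) as [E1 _].
  rewrite E1. unfold sref at 1. rewrite pr_vsh, K. unfold sref, vsh. simpl.
  rewrite !plus_IZR. f_equal; ring. Qed.

Theorem theorem1p3 (t : rtype) (alpha : E) (c : Z) (x : E -> E) (n : nat) :
  In alpha (Phi t) ->
  (forall v, A0 t v -> IZR c <= ip t (x v) alpha <= IZR c + 1) ->
  coxeter_length t x n ->
  coxeter_length t (fun v => refl t alpha (IZR c + 1) (x v)) (S n) ->
  coxeter_length t
    (fun v => refl t alpha (IZR c + 2) (refl t alpha (IZR c + 1) (x v))) (S (S n)) ->
  coxeter_length t (fun v => refl t alpha (IZR c) (x v)) (S n) \/
  ((0 < n)%nat /\ coxeter_length t (fun v => refl t alpha (IZR c) (x v)) (pred n)).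
Proof.
  intros Ha Hs H0 H1 H2.
  destruct (len_F _ _ _ H0) as [E0 [G0 [w0 [R0 L0]]]].
  destruct (len_F _ _ _ H1) as [E1 [G1 [w1 [R1 L1]]]].
  destruct (len_F _ _ _ H2) as [E2 [G2 [w2 [R2 L2]]]].
  cbv beta in E1, E2, G1, G2.
  replace (IZR c + 1) with (IZR (c+1)) in * by (rewrite plus_IZR; reflexivity).
  replace (IZR c + 2) with (IZR (c+2)) in * by (rewrite plus_IZR; reflexivity).
  rewrite P_refl in E1, G1 by auto. rewrite P_refl, P_refl in E2 by auto. rewrite P_refl, P_refl in G2 by auto.
  set (y := P t (x (p0 t))) in *.
  pose proof (kap_2 t alpha Ha) as K.
  destruct (sref_sref t alpha (c+1) (c+2) y K) as [SS _].
  rewrite SS in E2, G2.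
  replace (IZR (c+2) - IZR (c+1)) with 1 in E2, G2 by (rewrite !plus_IZR; ring).
  set (a := pr alpha y).
  assert (Ha1 : IZR c <= a <= IZR c + 1).
  { unfold a, y. rewrite <- ip_pr. rewrite <- plus_IZR. apply Hs. apply A0_p0. }
  pose proof (generic_Phi t y alpha G0 Ha) as Ga. fold a in Ga.
  assert (Hac : IZR c < a < IZR c + 1).
  { split; [assert (a <> IZR c) by apply Ga | assert (a <> IZR (c+1)) by apply Ga; rewrite plus_IZR in H]; lra. }
  set (tt := a - IZR c).
  assert (Y1 : sref t alpha (c+1) y = vsh y (1 - tt) (kap t alpha)).
  { unfold sref, vsh, tt. fold a. rewrite plus_IZR. f_equal; ring. }
  assert (Y0 : sref t alpha c y = vsh y (- tt) (kap t alpha)).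
  { unfold sref, vsh, tt. fold a. f_equal; ring. }
  assert (Y0' : sref t alpha (c+1) (vsh y 1 (kap t alpha)) = sref t alpha c y).
  { unfold sref at 1. rewrite pr_vsh, K. unfold sref, vsh. fold a. rewrite plus_IZR. simpl. f_equal; ring. }
  destruct (kap_int t alpha Ha) as [k1 [k2 Kk]].
  assert (LB : (F t y - F t (sref t alpha c y) <= 1)%Z).
  { rewrite Y0. pose proof (lower_Fl (pos_roots t) y k1 k2 tt (pos_intvec t) ltac:(unfold tt; lra)) as L.
    rewrite <- Kk in L. rewrite Y1 in E1. unfold F in *. lia. }
  assert (UB : (F t (sref t alpha c y) <= F t (vsh y 1 (kap t alpha)) - 1)%Z).
  { rewrite <- Y0'. assert (Ea : pr alpha (vsh y 1 (kap t alpha)) = a + 2) by (rewrite pr_vsh, K; fold a; ring).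
    destruct (Phi_split t alpha Ha) as [Hp|[b [Hb ->]]].
    - assert (Hc1 : (c + 1 >= 1)%Z).
      { destruct (Z_le_gt_dec (c+1) 0) as [Hle|]; [|lia]. exfalso.
        assert (farP a (c+1)) by (right; split; [rewrite plus_IZR; lra | auto]).
        pose proof (refl_pos t alpha (c+1) y Hp G0 H). lia. }
      apply refl_pos; auto. rewrite Ea. left. split; [rewrite plus_IZR; lra | auto].
    - assert (Hc1 : (c + 1 >= 0)%Z).
      { destruct (Z_le_gt_dec (c+1) (-1)) as [Hle|]; [|lia]. exfalso.
        assert (farN a (c+1)) by (right; split; [rewrite plus_IZR; lra | auto]).
        pose proof (refl_neg t b (c+1) y Hb G0 H). lia. }
      apply refl_neg; auto. rewrite Ea. left. split; [rewrite plus_IZR; lra | auto]. }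
  assert (Rr : represents t (w1 ++ rev w0 ++ w2) (fun v => refl t alpha (IZR c) (x v))).
  { intros v.
    assert (X: x (word_eval t (rev w0) (word_eval t w2 v)) = word_eval t w2 v) by (rewrite R0; apply eval_rev_r).
    rewrite !eval_app, <- R1. cbv beta. rewrite X, <- R2. cbv beta.
    rewrite <- (refl_triple t alpha c (x v) Ha). rewrite <- !plus_IZR. reflexivity. }
  destruct (len_parity _ _ _ Rr) as [k Hk]. cbv beta in Hk. rewrite P_refl in Hk by auto. fold y in Hk.
  rewrite !length_app, length_rev, L0, L1, L2 in Hk.
  pose proof (Fl_nonneg (pos_roots t) (sref t alpha c y)) as NN. fold (F t (sref t alpha c y)) in NN.
  assert (Cases : F t (sref t alpha c y) = Z.of_nat (S n) \/ (0 < n)%nat /\ F t (sref t alpha c y) = Z.of_nat (pred n)) by lia.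
  destruct Cases as [C|[Cn C]].
  - left. apply (len_intro t _ _ _ Rr). cbv beta. rewrite P_refl by auto. exact C.
  - right. split; auto. apply (len_intro t _ _ _ Rr). cbv beta. rewrite P_refl by auto. exact C.
Qed.
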